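(* Consider the sub-$\ell^\infty$ structure on $\mathbb{R}^3$ defined by $X_1=\partial_x-\tfrac{y}{2}\partial_z$, $X_2=\partial_y+\tfrac{x}{2}\partial_z$. A regular bang-bang trajectory with more than $5$ arcs is not a time-minimizer.
   Context: Sub-$\ell^\infty$ structure defined by smooth vector fields $X_1,\dots,X_k$ on a manifold $M$: an admissible trajectory is an absolutely continuous curve $\gamma:[0,T]\to M$ together with a measurable control $u=(u_1,\dots,u_k):[0,T]\to\mathbb{R}^k$ with $|u_i(t)|\le1$ for all $i$ and a.e. $t$, such that $\dot\gamma(t)=\sum_i u_i(t)X_i(\gamma(t))$ for a.e. $t$. It is a time-minimizer (optimal) if no admissible trajectory joins $\gamma(0)$ to $\gamma(T)$ in time less than $T$. An extremal pair is a pair $(\lambda,\gamma)$ where $\gamma$ is admissible with control $u$ and $\lambda:[0,T]\to T^*M$ is absolutely continuous with $\lambda(t)\in T^*_{\gamma(t)}M\setminus\{0\}$, such that, with $\mathcal H(\lambda,p,u)=\sum_i u_i\langle\lambda,X_i(p)\rangle$, in canonical coordinates $\dot\lambda=-\partial_p\mathcal H(\lambda,\gamma,u)$, $\dot\gamma=\partial_\lambda\mathcal H(\lambda,\gamma,u)$ a.e., and there is a constant $\lambda_0\ge0$ with $\sum_iu_i(t)\langle\lambda(t),X_i(\gamma(t))\rangle=\sum_i|\langle\lambda(t),X_i(\gamma(t))\rangle|=\lambda_0$ for a.e. $t$; $\gamma$ is then an extremal trajectory and $\lambda$ an extremal lift. The switching functions are $\varphi_j(t)=\langle\lambda(t),X_j(\gamma(t))\rangle$.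 The restriction of an extremal pair to an open interval $I$ is a regular arc if $\varphi_j(t)\ne0$ for all $t\in I$ and all $j$; arcs are taken maximal (not contained in a strictly larger open interval with the same property). A regular bang-bang trajectory is an extremal trajectory with an extremal lift such that $[0,T]$ minus finitely many points is a finite union of maximal regular arcs (on each of which the control is then constant with values in $\{1,-1\}^k$); these are its arcs. *)

(* Defs.v *)
From Stdlib Require Import Reals List.
Open Scope R_scope.

(** Points / covectors of R^3 (canonical coordinates on T*R^3). *)
Definition R3 : Type := (R * R * R)%type.
Definition c0 (v : R3) : R := fst (fst v).
Definition c1 (v : R3) : R := snd (fst v).
Definition c2 (v : R3) : R := snd v.
Definition coord (k : nat) (v : R3) : R :=
  match k with 0%nat => c0 v | 1%nat => c1 v | _ => c2 v end.
Definition setc (k : nat) (v : R3) (s : R) : R3 :=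
  match k with
  | 0%nat => (s, c1 v, c2 v)
  | 1%nat => (c0 v, s, c2 v)
  | _ => (c0 v, c1 v, s)
  end.
Definition pairing (l v : R3) : R := c0 l * c0 v + c1 l * c1 v + c2 l * c2 v.

Definition X1 (p : R3) : R3 := (1, 0, - c1 p / 2).
Definition X2 (p : R3) : R3 := (0, 1, c0 p / 2).

Definition combo (u : R * R) (p : R3) : R3 :=
  (fst u * c0 (X1 p) + snd u * c0 (X2 p),
   fst u * c1 (X1 p) + snd u * c1 (X2 p),
   fst u * c2 (X1 p) + snd u * c2 (X2 p)).

Definition null_set (N : R -> Prop) : Prop :=
  forall eps, 0 < eps ->
    exists a b : nat -> R,
      (forall n, a n <= b n) /\
      (forall t, N t -> exists n, a n < t < b n) /\
      (forall n, sum_f_R0 (fun k => b k - a k) n <= eps).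

Definition ae_on (T : R) (P : R -> Prop) : Prop :=
  exists N, null_set N /\ forall t, 0 <= t <= T -> ~ N t -> P t.

(** Absolute continuity on [a,b]: finite families of non-overlapping
    subintervals a <= x1 <= y1 <= x2 <= y2 <= ... <= b. *)
Fixpoint chain (a : R) (l : list (R * R)) (b : R) : Prop :=
  match l with
  | nil => a <= b
  | (x, y) :: l' => a <= x /\ x <= y /\ chain y l' b
  end.

Definition abs_cont (f : R -> R) (a b : R) : Prop :=
  forall eps, 0 < eps -> exists delta, 0 < delta /\
    forall l, chain a l b ->
      fold_right (fun p acc => (snd p - fst p) + acc) 0 l < delta ->
      fold_right (fun p acc => Rabs (f (snd p) - f (fst p)) + acc) 0 l < eps.

Definition abs_cont3 (g : R -> R3) (a b : R) : Prop :=
  forall k, (k < 3)%nat -> abs_cont (fun t => coord k (g t)) a b.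

Definition admissible (g : R -> R3) (u : R -> R * R) (T : R) : Prop :=
  0 <= T /\ abs_cont3 g 0 T /\
  ae_on T (fun t => Rabs (fst (u t)) <= 1 /\ Rabs (snd (u t)) <= 1) /\
  ae_on T (fun t => forall k, (k < 3)%nat ->
      derivable_pt_lim (fun s => coord k (g s)) t (coord k (combo (u t) (g t)))).

Definition time_minimizer (g : R -> R3) (T : R) : Prop :=
  ~ exists (g' : R -> R3) (u' : R -> R * R) (T' : R),
      T' < T /\ admissible g' u' T' /\ g' 0 = g 0 /\ g' T' = g T.

Definition Ham (l p : R3) (u : R * R) : R :=
  fst u * pairing l (X1 p) + snd u * pairing l (X2 p).

Definition phi1 (l g : R -> R3) (t : R) : R := pairing (l t) (X1 (g t)).
Definition phi2 (l g : R -> R3) (t : R) : R := pairing (l t) (X2 (g t)).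

Definition extremal_pair (l g : R -> R3) (u : R -> R * R) (T : R) : Prop :=
  admissible g u T /\ abs_cont3 l 0 T /\
  (forall t, 0 <= t <= T -> l t <> (0, 0, 0)) /\
  ae_on T (fun t => forall k, (k < 3)%nat ->
     exists dHp dHl,
       derivable_pt_lim (fun s => Ham (l t) (setc k (g t) s) (u t)) (coord k (g t)) dHp /\
       derivable_pt_lim (fun s => Ham (setc k (l t) s) (g t) (u t)) (coord k (l t)) dHl /\
       derivable_pt_lim (fun s => coord k (l s)) t (- dHp) /\
       derivable_pt_lim (fun s => coord k (g s)) t dHl) /\
  exists lam0, 0 <= lam0 /\
    ae_on T (fun t =>
      fst (u t) * phi1 l g t + snd (u t) * phi2 l g t = lam0 /\
      Rabs (phi1 l g t) + Rabs (phi2 l g t) = lam0).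

Definition regular_on (l g : R -> R3) (a b : R) : Prop :=
  forall t, a < t < b -> phi1 l g t <> 0 /\ phi2 l g t <> 0.

Definition max_regular_arc (l g : R -> R3) (T a b : R) : Prop :=
  0 <= a /\ a < b /\ b <= T /\ regular_on l g a b /\
  forall a' b', 0 <= a' -> b' <= T -> a' <= a -> b <= b' ->
    regular_on l g a' b' -> a' = a /\ b' = b.

Definition regular_bang_bang_arcs (g : R -> R3) (T : R) (n : nat) : Prop :=
  exists (u : R -> R * R) (l : R -> R3) (arcs : list (R * R)) (F : list R),
    extremal_pair l g u T /\
    NoDup arcs /\ length arcs = n /\
    (forall ab, In ab arcs -> max_regular_arc l g T (fst ab) (snd ab)) /\
    (forall t, 0 <= t <= T -> ~ In t F ->
       exists ab, In ab arcs /\ fst ab < t < snd ab).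

(* Main.v *)
Require Import Defs.
From Stdlib Require Import Reals Ranalysis5 List Lra Lia Classical.
Open Scope R_scope.


Lemma abs_le_inv x w : Rabs x <= w -> -w <= x <= w.
Proof. unfold Rabs; destruct Rcase_abs; lra. Qed.
Lemma abs_lt_inv x w : Rabs x < w -> -w < x < w.
Proof. unfold Rabs; destruct Rcase_abs; lra. Qed.
Lemma abs_le_intro x w : -w <= x <= w -> Rabs x <= w.
Proof. unfold Rabs; destruct Rcase_abs; lra. Qed.
Lemma abs_lt_intro x w : -w < x < w -> Rabs x < w.
Proof. unfold Rabs; destruct Rcase_abs; lra. Qed.

Definition tlen (L : list (R*R)) := fold_right (fun p acc => (snd p - fst p) + acc) 0 L.
Definition tvar (f : R -> R) (L : list (R*R)) :=
  fold_right (fun p acc => Rabs (f (snd p) - f (fst p)) + acc) 0 L.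

Lemma fold_shift (h : R*R -> R) c L :
  fold_right (fun p acc => h p + acc) c L = fold_right (fun p acc => h p + acc) 0 L + c.
Proof. induction L; simpl; [lra| rewrite IHL; lra]. Qed.

Lemma tlen_app1 L x y : tlen (L ++ (x,y)::nil) = tlen L + (y - x).
Proof.
  unfold tlen; rewrite fold_right_app; simpl.
  rewrite (fold_shift (fun p => snd p - fst p)); lra.
Qed.
Lemma tvar_app1 f L x y : tvar f (L ++ (x,y)::nil) = tvar f L + Rabs (f y - f x).
Proof.
  unfold tvar; rewrite fold_right_app; simpl.
  rewrite (fold_shift (fun p => Rabs (f (snd p) - f (fst p)))); lra.
Qed.

Lemma chain_ext_r a L x y : chain a L x -> x <= y -> chain a L y.
Proof. revert a; induction L as [|[p q] L IH]; simpl; intros a H1 H2; [lra|].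
  destruct H1 as [? [? H1]]; repeat split; auto. Qed.
Lemma chain_app a L x y : chain a L x -> x <= y -> chain a (L ++ (x,y)::nil) y.
Proof. revert a; induction L as [|[p q] L IH]; simpl; intros a H1 H2; [lra|].
  destruct H1 as [? [? H1]]; repeat split; auto. Qed.
Lemma chain_widen a a' L b b' : chain a L b -> a' <= a -> b <= b' -> chain a' L b'.
Proof. revert a a'; induction L as [|[p q] L IH]; simpl; intros a a' H1 H2 H3; [lra|].
  destruct H1 as [? [? H1]]; repeat split; try lra. apply (IH q q); auto; lra. Qed.
Lemma chain_le a L b : chain a L b -> a <= b.
Proof. revert a; induction L as [|[p q] L IH]; simpl; intros; [lra|].
  destruct H as [? [? H]]; apply IH in H; lra. Qed.
Lemma chain_tlen a L b : chain a L b -> 0 <= tlen L.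
Proof. revert a; induction L as [|[p q] L IH]; simpl; intros; [lra|].
  destruct H as [? [? H]]; apply IH in H; unfold tlen in *; simpl in *; lra. Qed.

Lemma abs_cont_sub f a b p q : abs_cont f a b -> a <= p -> q <= b -> abs_cont f p q.
Proof.
  intros H Hp Hq eps He. destruct (H eps He) as [d [Hd H']]. exists d; split; auto.
  intros l Hl; apply H'. eapply chain_widen; eauto.
Qed.

Lemma sum_nonneg_mono (h : nat -> R) n m :
  (forall k, 0 <= h k) -> (n <= m)%nat -> sum_f_R0 h n <= sum_f_R0 h m.
Proof.
  intros Hh Hnm; induction Hnm; [lra|]. rewrite tech5. specialize (Hh (S m)); lra.
Qed.

Lemma null_point x : null_set (fun t => t = x).
Proof.
  intros eps He.
  exists (fun n => match n with O => x - eps/4 | S _ => 0 end).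
  exists (fun n => match n with O => x + eps/4 | S _ => 0 end).
  split; [intros [|n]; lra|]. split.
  - intros t ->; exists O; lra.
  - intros n; induction n; simpl; [lra|]. lra.
Qed.

Definition ileave (h1 h2 : nat -> R) (n : nat) : R :=
  if Nat.even n then h1 (Nat.div2 n) else h2 (Nat.div2 n).
Lemma ileave_even h1 h2 k : ileave h1 h2 (2*k) = h1 k.
Proof. unfold ileave; rewrite Nat.even_even, Nat.div2_double; auto. Qed.
Lemma ileave_odd h1 h2 k : ileave h1 h2 (S (2*k)) = h2 k.
Proof. unfold ileave. rewrite Nat.div2_succ_double, Nat.even_succ, Nat.odd_mul.
  change (Nat.odd 2) with false; reflexivity. Qed.

Lemma sum_ileave h1 h2 n :
  sum_f_R0 (fun k => ileave h1 h2 k) (S (2*n)) = sum_f_R0 h1 n + sum_f_R0 h2 n.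
Proof.
  induction n.
  - simpl. unfold ileave; simpl. lra.
  - replace (S (2 * S n)) with (S (S (S (2*n)))) by lia.
    rewrite tech5, tech5, IHn, tech5, tech5.
    replace (S (S (2*n))) with (2 * S n)%nat by lia.
    replace (S (2 * S n)) with (S (2 * S n)) by lia.
    rewrite ileave_even, ileave_odd. lra.
Qed.

Lemma null_union N1 N2 : null_set N1 -> null_set N2 -> null_set (fun t => N1 t \/ N2 t).
Proof.
  intros H1 H2 eps He.
  destruct (H1 (eps/2) ltac:(lra)) as [a1 [b1 [Hab1 [Hc1 Hs1]]]].
  destruct (H2 (eps/2) ltac:(lra)) as [a2 [b2 [Hab2 [Hc2 Hs2]]]].
  exists (ileave a1 a2), (ileave b1 b2).
  split; [intros n; unfold ileave; destruct (Nat.even n); auto|]. split.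
  - intros t [Ht|Ht].
    + destruct (Hc1 t Ht) as [n Hn]; exists (2*n)%nat; rewrite !ileave_even; auto.
    + destruct (Hc2 t Ht) as [n Hn]; exists (S (2*n))%nat; rewrite !ileave_odd; auto.
  - intros n.
    assert (Hnn : forall k, 0 <= ileave b1 b2 k - ileave a1 a2 k).
    { intros k; unfold ileave; destruct (Nat.even k); [specialize (Hab1 (Nat.div2 k))|specialize (Hab2 (Nat.div2 k))]; lra. }
    apply Rle_trans with (sum_f_R0 (fun k => ileave b1 b2 k - ileave a1 a2 k) (S (2*n))).
    { apply sum_nonneg_mono; auto; lia. }
    replace (sum_f_R0 (fun k => ileave b1 b2 k - ileave a1 a2 k) (S (2*n)))
      with (sum_f_R0 (fun k => ileave (fun j => b1 j - a1 j) (fun j => b2 j - a2 j) k) (S (2*n))).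
    2:{ apply sum_eq; intros i _; unfold ileave; destruct (Nat.even i); auto. }
    rewrite sum_ileave. specialize (Hs1 n); specialize (Hs2 n); lra.
Qed.


Lemma deriv_local f t d e : derivable_pt_lim f t d -> 0 < e ->
  exists del, 0 < del /\ forall s, Rabs (s - t) < del ->
    Rabs (f s - f t - d*(s-t)) <= e * Rabs (s - t).
Proof.
  intros H He. destruct (H e He) as [del Hd]. exists del; split; [apply cond_pos|].
  intros s Hs. destruct (Req_dec s t) as [->|Hne].
  - replace (f t - f t - d*(t-t)) with 0 by ring. rewrite Rabs_R0, Rminus_diag, Rabs_R0; lra.
  - specialize (Hd (s - t) ltac:(lra) Hs). replace (t + (s - t)) with s in Hd by ring.
    replace (f s - f t - d*(s-t)) with (((f s - f t)/(s-t) - d) * (s - t)) by (field; lra).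
    rewrite Rabs_mult. apply Rmult_le_compat_r; [apply Rabs_pos|lra].
Qed.

Lemma null_add2 N a b : null_set N -> null_set (fun t => N t \/ t = a \/ t = b).
Proof.
  intros H. apply null_union; auto. apply null_union; apply null_point.
Qed.


Lemma core0 (f : R -> R) (a b m : R) (N : R -> Prop) :
  a <= b -> abs_cont f a b -> null_set N ->
  (forall t, a <= t <= b -> ~ N t -> exists d, derivable_pt_lim f t d /\ m <= d) ->
  forall eps, 0 < eps -> (m - eps)*(b-a) - eps - (Rabs m + eps)*eps <= f b - f a.
Proof.
  intros Hab HAC HN Hder eps Heps.
  destruct (HAC eps Heps) as [del [Hdel HAC']].
  set (d2 := Rmin del eps / 2).
  assert (Hd2 : 0 < d2) by (unfold d2; assert (0 < Rmin del eps) by (apply Rmin_glb_lt; lra); lra).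
  assert (Hd2a : d2 < del /\ d2 <= eps) by (unfold d2; split; [pose proof (Rmin_l del eps)|pose proof (Rmin_r del eps)]; lra).
  destruct (HN d2 Hd2) as [ak [bk [Habk [Hcov Hsum]]]].
  set (P := fun x => exists L use M, chain a L x /\
    (forall k, 0 <= use k /\ use k <= Rmax 0 (x - ak k) /\ use k <= bk k - ak k) /\
    tlen L <= sum_f_R0 use M /\
    (m - eps)*(x - a) - tvar f L - (Rabs m + eps) * tlen L <= f x - f a).
  assert (Step : forall t, a <= t <= b -> exists dt, 0 < dt /\
     forall x y, a <= x -> x <= t -> t <= y -> y <= b -> t - x < dt -> y - t < dt -> P x -> P y).
  { intros t Ht. destruct (classic (N t)) as [HNt|HNt].
    - destruct (Hcov t HNt) as [n Hn].
      exists (Rmin (t - ak n) (bk n - t)). split; [apply Rmin_glb_lt; lra|].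
      intros x y Hx1 Hx2 Hy1 Hy2 Hxt Hyt [L [use [M [Hch [Hu [Hl Hf]]]]]].
      pose proof (Rmin_l (t - ak n) (bk n - t)); pose proof (Rmin_r (t - ak n) (bk n - t)).
      exists (L ++ (x,y)::nil), (fun k => if Nat.eq_dec k n then use k + (y - x) else use k), (Nat.max M n).
      split; [apply chain_app; auto; lra|]. split; [|split].
      + intros k. destruct (Nat.eq_dec k n) as [->|Hk].
        * destruct (Hu n) as [U1 [U2 U3]]. rewrite Rmax_right in U2 by lra.
          split; [lra|]. split; [apply Rle_trans with (y - ak n); [lra|apply Rmax_r]|lra].
        * destruct (Hu k) as [U1 [U2 U3]]. split; auto. split; auto.
          apply Rle_trans with (1 := U2). apply Rle_max_compat_l; lra.
      + rewrite tlen_app1.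
        assert (HS : forall M', (n <= M')%nat -> sum_f_R0 (fun k => if Nat.eq_dec k n then use k + (y - x) else use k) M' = sum_f_R0 use M' + (y - x)).
        { induction M'; intros HM.
          - assert (n = 0%nat) by lia; subst. simpl. lra.
          - destruct (Nat.eq_dec n (S M')) as [Heq|Hne].
            + rewrite !tech5. rewrite (sum_eq _ use).
              * destruct (Nat.eq_dec (S M') n); [lra|congruence].
              * intros i Hi. destruct (Nat.eq_dec i n); [lia|auto].
            + rewrite !tech5, IHM' by lia. destruct (Nat.eq_dec (S M') n); [lia|lra]. }
        rewrite HS by lia.
        assert (sum_f_R0 use M <= sum_f_R0 use (Nat.max M n)).
        { apply sum_nonneg_mono; [intros k; apply Hu| lia]. }
        lra.
      + rewrite tlen_app1, tvar_app1.
        pose proof (Rle_abs (f y - f x)). pose proof (Rle_abs m).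
        assert (0 <= y - x) by lra.
        assert ((m - eps) * (y - x) <= (Rabs m + eps) * (y - x)) by (apply Rmult_le_compat_r; lra).
        assert (- Rabs (f y - f x) <= f y - f x).
        { pose proof (Rle_abs (- (f y - f x))) as HH. rewrite Rabs_Ropp in HH. lra. }
        assert ((m - eps)*(y-a) = (m-eps)*(x-a) + (m-eps)*(y-x)) by ring.
        assert ((Rabs m + eps)*(tlen L + (y-x)) = (Rabs m+eps)*tlen L + (Rabs m+eps)*(y-x)) by ring.
        lra.
    - assert (Hder' := Hder t Ht HNt). destruct Hder' as [d [Hd Hmd]].
      destruct (deriv_local f t d eps Hd Heps) as [dt [Hdt Hloc]].
      exists dt; split; auto.
      intros x y Hx1 Hx2 Hy1 Hy2 Hxt Hyt [L [use [M [Hch [Hu [Hl Hf]]]]]].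
      exists L, use, M. split; [apply chain_ext_r with x; auto; lra|]. split; [|split; auto].
      + intros k. destruct (Hu k) as [U1 [U2 U3]]. split; auto. split; auto.
        apply Rle_trans with (1 := U2). apply Rle_max_compat_l; lra.
      + assert (H1 := Hloc y ltac:(apply abs_lt_intro; lra)).
        assert (H2 := Hloc x ltac:(apply abs_lt_intro; lra)).
        rewrite (Rabs_right (y - t)) in H1 by lra. rewrite (Rabs_left1 (x - t)) in H2 by lra.
        apply abs_le_inv in H1. apply abs_le_inv in H2.
        assert ((m - eps) * (y - t) <= (d - eps) * (y - t)) by (apply Rmult_le_compat_r; lra).
        assert ((m - eps) * (t - x) <= (d - eps) * (t - x)) by (apply Rmult_le_compat_r; lra).
        assert ((m - eps)*(y-a) = (m-eps)*(x-a) + (m-eps)*(y-t) + (m-eps)*(t-x)) by ring.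
        assert (eps * (y - t) = d*(y-t) - (d-eps)*(y-t)) by ring.
        assert (eps * (-(x - t)) = d*(t-x) - (d-eps)*(t-x)) by ring.
        lra. }
  set (E := fun x => a <= x <= b /\ P x).
  assert (HPa : P a).
  { exists nil, (fun _ => 0), O. simpl. split; [lra|]. split.
    - intros k; split; [lra|]; split; [apply Rmax_l|]. specialize (Habk k); lra.
    - unfold tlen, tvar; simpl. lra. }
  destruct (completeness E) as [s [Hub Hlub]].
  { exists b. intros x Hx; apply Hx. }
  { exists a; split; auto; lra. }
  assert (Has : a <= s) by (apply Hub; split; auto; lra).
  assert (Hsb : s <= b) by (apply Hlub; intros x Hx; apply Hx).
  destruct (Step s ltac:(lra)) as [dt [Hdt Hst]].
  assert (HPs : P s).
  { destruct (classic (exists x, E x /\ s - dt < x)) as [[x [[Hx1 Hx2] Hx3]]|Hno].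
    - assert (x <= s) by (apply Hub; split; auto).
      apply (Hst x s); auto; lra.
    - exfalso. assert (s <= s - dt); [|lra].
      apply Hlub. intros x Hx. apply Rnot_lt_le. intros Hlt. apply Hno; eauto. }
  assert (Hsb' : s = b).
  { destruct (Req_dec s b); auto. exfalso.
    set (y := Rmin b (s + dt/2)).
    assert (s < y /\ y <= b /\ y - s < dt).
    { unfold y. pose proof (Rmin_l b (s + dt/2)); pose proof (Rmin_r b (s + dt/2)).
      repeat split; try lra. apply Rmin_glb_lt; lra. }
    assert (E y) by (split; [lra| apply (Hst s y); auto; lra]).
    assert (y <= s) by (apply Hub; auto). lra. }
  subst s. destruct HPs as [L [use [M [Hch [Hu [Hl Hf]]]]]].
  assert (Hsum' : sum_f_R0 use M <= d2).
  { apply Rle_trans with (sum_f_R0 (fun k => bk k - ak k) M); [apply sum_Rle; intros; apply Hu|apply Hsum]. }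
  assert (Htl : tlen L < del) by lra.
  assert (Hvar : tvar f L < eps) by (apply HAC'; auto).
  assert (0 <= tlen L) by (eapply chain_tlen; eauto).
  assert ((Rabs m + eps) * tlen L <= (Rabs m + eps) * eps).
  { apply Rmult_le_compat_l; [pose proof (Rabs_pos m); lra|lra]. }
  lra.
Qed.

Lemma core_closed (f : R -> R) (a b m : R) (N : R -> Prop) :
  a <= b -> abs_cont f a b -> null_set N ->
  (forall t, a <= t <= b -> ~ N t -> exists d, derivable_pt_lim f t d /\ m <= d) ->
  m * (b - a) <= f b - f a.
Proof.
  intros Hab HAC HN Hder. apply Rnot_lt_le; intros Hlt.
  set (gap := m * (b - a) - (f b - f a)).
  set (K := b - a + Rabs m + 3).
  assert (HK : 0 < K) by (unfold K; pose proof (Rabs_pos m); lra).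
  set (eps := Rmin 1 (gap / K)).
  assert (He : 0 < eps) by (unfold eps; apply Rmin_glb_lt; [lra|unfold gap; apply Rdiv_lt_0_compat; lra]).
  assert (He1 : eps <= 1) by apply Rmin_l.
  assert (He2 : eps * K <= gap).
  { unfold eps. pose proof (Rmin_r 1 (gap/K)).
    apply Rle_trans with ((gap / K) * K); [apply Rmult_le_compat_r; lra|]. right; field; lra. }
  pose proof (core0 f a b m N Hab HAC HN Hder eps He).
  pose proof (Rabs_pos m).
  assert ((Rabs m + eps) * eps <= (Rabs m + 1) * eps) by (apply Rmult_le_compat_r; lra).
  unfold K, gap in *. nra.
Qed.

Lemma core (f : R -> R) (a b m : R) (N : R -> Prop) :
  a <= b -> abs_cont f a b -> null_set N ->
  (forall t, a < t < b -> ~ N t -> exists d, derivable_pt_lim f t d /\ m <= d) ->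
  m * (b - a) <= f b - f a.
Proof.
  intros Hab HAC HN Hder.
  apply (core_closed f a b m _ Hab HAC (null_add2 N a b HN)).
  intros t Ht HNt. apply Hder.
  - destruct Ht as [H1 H2]; destruct H1 as [H1|H1]; [|exfalso; apply HNt; auto].
    destruct H2 as [H2|H2]; [lra|exfalso; apply HNt; auto].
  - intros H; apply HNt; auto.
Qed.


Definition lip (f : R -> R) a b K := forall x y, a <= x -> x <= y -> y <= b -> Rabs (f y - f x) <= K * (y - x).

Lemma lip_tvar f a b K L x : 0 <= K -> lip f a b K -> chain x L b -> a <= x -> tvar f L <= K * tlen L.
Proof.
  intros HK Hl. revert x; induction L as [|[p q] L IH]; intros x Hc Hx.
  - unfold tvar, tlen; simpl; lra.
  - destruct Hc as [H1 [H2 H3]].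
    assert (q <= b) by (apply chain_le in H3; auto).
    specialize (IH q H3 ltac:(lra)). specialize (Hl p q ltac:(lra) H2 H).
    unfold tvar, tlen in *; simpl in *. lra.
Qed.

Lemma lip_ac f a b K : 0 <= K -> lip f a b K -> abs_cont f a b.
Proof.
  intros HK Hl eps He. exists (eps / (K + 1)). split; [apply Rdiv_lt_0_compat; lra|].
  intros L Hc Hlen. fold (tlen L) in Hlen. fold (tvar f L).
  pose proof (lip_tvar f a b K L a HK Hl Hc ltac:(lra)).
  pose proof (chain_tlen _ _ _ Hc).
  assert (K * tlen L <= K * (eps / (K+1))) by (apply Rmult_le_compat_l; lra).
  assert (K * (eps / (K + 1)) < eps).
  { apply Rmult_lt_reg_r with (K + 1); [lra|]. unfold Rdiv.
    replace (K * (eps * / (K + 1)) * (K + 1)) with (K * eps) by (field; lra). nra. }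
  lra.
Qed.

Lemma ac_opp f a b : abs_cont f a b -> abs_cont (fun t => - f t) a b.
Proof.
  intros H eps He. destruct (H eps He) as [d [Hd H']]. exists d; split; auto.
  intros L Hc Hlen. specialize (H' L Hc Hlen).
  replace (fold_right (fun p acc => Rabs (- f (snd p) - - f (fst p)) + acc) 0 L)
    with (fold_right (fun p acc => Rabs (f (snd p) - f (fst p)) + acc) 0 L); auto.
  clear. induction L; simpl; auto. rewrite IHL. f_equal.
  rewrite <- Rabs_Ropp. f_equal; ring.
Qed.

Lemma core_upper (f : R -> R) (a b M : R) (N : R -> Prop) :
  a <= b -> abs_cont f a b -> null_set N ->
  (forall t, a < t < b -> ~ N t -> exists d, derivable_pt_lim f t d /\ d <= M) ->
  f b - f a <= M * (b - a).
Proof.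
  intros Hab HAC HN Hd.
  pose proof (core (fun t => - f t) a b (- M) N Hab (ac_opp f a b HAC) HN).
  cut (- M * (b - a) <= - f b - - f a); [lra|]. apply H.
  intros t Ht HNt. destruct (Hd t Ht HNt) as [d [H1 H2]]. exists (- d). split; [|lra].
  apply (derivable_pt_lim_opp f t d H1).
Qed.

Lemma core_eq (f : R -> R) (a b m : R) (N : R -> Prop) :
  a <= b -> abs_cont f a b -> null_set N ->
  (forall t, a < t < b -> ~ N t -> derivable_pt_lim f t m) ->
  f b = f a + m * (b - a).
Proof.
  intros Hab HAC HN Hd.
  pose proof (core f a b m N Hab HAC HN ltac:(intros t Ht HNt; exists m; split; auto; lra)).
  pose proof (core_upper f a b m N Hab HAC HN ltac:(intros t Ht HNt; exists m; split; auto; lra)).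
  lra.
Qed.

Lemma core_abs (f : R -> R) (a b K : R) (N : R -> Prop) :
  a <= b -> abs_cont f a b -> null_set N ->
  (forall t, a < t < b -> ~ N t -> exists d, derivable_pt_lim f t d /\ Rabs d <= K) ->
  Rabs (f b - f a) <= K * (b - a).
Proof.
  intros Hab HAC HN Hd. apply abs_le_intro.
  pose proof (core f a b (-K) N Hab HAC HN ltac:(intros t Ht HNt; destruct (Hd t Ht HNt) as [d [H1 H2]];
     apply abs_le_inv in H2; exists d; split; auto; lra)).
  pose proof (core_upper f a b K N Hab HAC HN ltac:(intros t Ht HNt; destruct (Hd t Ht HNt) as [d [H1 H2]];
     apply abs_le_inv in H2; exists d; split; auto; lra)).
  lra.
Qed.

Lemma lip_id_opp a b : lip (fun t => - t) a b 1.
Proof. intros x y _ Hxy _. replace (- y - - x) with (-(y - x)) by ring. rewrite Rabs_Ropp, Rabs_right; lra. Qed.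

Lemma nonnull N a b : null_set N -> a < b -> exists t, a < t < b /\ ~ N t.
Proof.
  intros HN Hab. apply NNPP; intros Hno.
  assert (H := core (fun t => - t) a b 0 N ltac:(lra) (lip_ac _ a b 1 ltac:(lra) (lip_id_opp a b)) HN).
  assert (0 * (b - a) <= - b - - a); [|lra].
  apply H. intros t Ht HNt. exfalso; apply Hno; eauto.
Qed.

Definition cont (f : R -> R) t := forall eps, 0 < eps -> exists del, 0 < del /\
  forall s, Rabs (s - t) < del -> Rabs (f s - f t) < eps.

Lemma ac_cont f a b t : abs_cont f a b -> a < t < b -> cont f t.
Proof.
  intros H Ht eps He. destruct (H eps He) as [d [Hd H']].
  exists (Rmin d (Rmin (t - a) (b - t))). split; [repeat apply Rmin_glb_lt; lra|].
  intros s Hs. pose proof (Rmin_l d (Rmin (t - a) (b - t))). pose proof (Rmin_r d (Rmin (t - a) (b - t))).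
  pose proof (Rmin_l (t - a) (b - t)); pose proof (Rmin_r (t - a) (b - t)).
  apply abs_lt_inv in Hs.
  destruct (Rle_dec s t).
  - specialize (H' ((s,t)::nil)). simpl in H'.
    replace (Rabs (f s - f t)) with (Rabs (f t - f s)) by (rewrite <- Rabs_Ropp; f_equal; ring).
    cut (Rabs (f t - f s) + 0 < eps); [lra|]. apply H'; [repeat split; lra| lra].
  - specialize (H' ((t,s)::nil)). simpl in H'.
    cut (Rabs (f s - f t) + 0 < eps); [lra|]. apply H'; [repeat split; lra| lra].
Qed.

Lemma cont_continuity_pt f t : cont f t -> continuity_pt f t.
Proof.
  intros H eps He. destruct (H eps He) as [d [Hd H']]. exists d; split; auto.
  intros x [_ Hx]. apply H'. exact Hx.
Qed.

Lemma cont_plus f g t : cont f t -> cont g t -> cont (fun s => f s + g s) t.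
Proof.
  intros Hf Hg eps He. destruct (Hf (eps/2) ltac:(lra)) as [d1 [Hd1 H1]].
  destruct (Hg (eps/2) ltac:(lra)) as [d2 [Hd2 H2]].
  exists (Rmin d1 d2); split; [apply Rmin_glb_lt; auto|].
  intros s Hs. pose proof (Rmin_l d1 d2); pose proof (Rmin_r d1 d2).
  specialize (H1 s ltac:(lra)); specialize (H2 s ltac:(lra)).
  replace (f s + g s - (f t + g t)) with ((f s - f t) + (g s - g t)) by ring.
  pose proof (Rabs_triang (f s - f t) (g s - g t)); lra.
Qed.

Lemma cont_scal c f t : cont f t -> cont (fun s => c * f s) t.
Proof.
  intros Hf eps He. destruct (Hf (eps/(Rabs c + 1))) as [d [Hd H1]].
  { apply Rdiv_lt_0_compat; [lra| pose proof (Rabs_pos c); lra]. }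
  exists d; split; auto. intros s Hs. specialize (H1 s Hs).
  replace (c * f s - c * f t) with (c * (f s - f t)) by ring. rewrite Rabs_mult.
  pose proof (Rabs_pos c). pose proof (Rabs_pos (f s - f t)).
  apply Rle_lt_trans with ((Rabs c + 1) * Rabs (f s - f t)); [nra|].
  apply Rmult_lt_reg_r with (/ (Rabs c + 1)); [apply Rinv_0_lt_compat; lra|].
  replace ((Rabs c + 1) * Rabs (f s - f t) * / (Rabs c + 1)) with (Rabs (f s - f t)) by (field; lra).
  exact H1.
Qed.

Lemma cont_ext f g t : (forall s, f s = g s) -> cont f t -> cont g t.
Proof. intros He H eps Hep. destruct (H eps Hep) as [d [Hd H']]. exists d; split; auto.
  intros s Hs. rewrite <- !He. auto. Qed.

Lemma cont_nonzero f t : cont f t -> f t <> 0 -> exists del, 0 < del /\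
  forall s, Rabs (s - t) < del -> f s * f t > 0.
Proof.
  intros H Hne. destruct (H (Rabs (f t)) ltac:(apply Rabs_pos_lt; auto)) as [d [Hd H']].
  exists d; split; auto. intros s Hs. specialize (H' s Hs). apply abs_lt_inv in H'.
  unfold Rabs in H'; destruct (Rcase_abs (f t)); nra.
Qed.


Definition Gf (h : R -> R3) (k : nat) : R -> R := fun t => coord k (h t).

Definition Good (g l : R -> R3) (u : R -> R*R) (lam0 : R) (t : R) : Prop :=
  derivable_pt_lim (Gf g 0) t (fst (u t)) /\
  derivable_pt_lim (Gf g 1) t (snd (u t)) /\
  derivable_pt_lim (Gf g 2) t (- fst (u t) * Gf g 1 t / 2 + snd (u t) * Gf g 0 t / 2) /\
  derivable_pt_lim (Gf l 0) t (- snd (u t) * Gf l 2 t / 2) /\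
  derivable_pt_lim (Gf l 1) t (fst (u t) * Gf l 2 t / 2) /\
  derivable_pt_lim (Gf l 2) t 0 /\
  Rabs (fst (u t)) <= 1 /\ Rabs (snd (u t)) <= 1 /\
  fst (u t) * phi1 l g t + snd (u t) * phi2 l g t = lam0 /\
  Rabs (phi1 l g t) + Rabs (phi2 l g t) = lam0.

Lemma phi1_eq l g t : phi1 l g t = Gf l 0 t - Gf l 2 t * Gf g 1 t / 2.
Proof. unfold phi1, pairing, X1, Gf, coord, c0, Defs.c1, c2; simpl; field. Qed.
Lemma phi2_eq l g t : phi2 l g t = Gf l 1 t + Gf l 2 t * Gf g 0 t / 2.
Proof. unfold phi2, pairing, X2, Gf, coord, c0, Defs.c1, c2; simpl; field. Qed.

Lemma deriv_affine F A B x : (forall s, F s = A + B*s) -> derivable_pt_lim F x B.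
Proof.
  intros HF eps He. exists (mkposreal 1 Rlt_0_1). intros h Hh _.
  rewrite !HF. replace ((A + B * (x + h) - (A + B * x)) / h - B) with 0 by (field; auto).
  rewrite Rabs_R0; auto.
Qed.

Lemma deriv_val f t d d' : derivable_pt_lim f t d -> d = d' -> derivable_pt_lim f t d'.
Proof. intros H ->; exact H. Qed.

Lemma ae_and T P Q : ae_on T P -> ae_on T Q -> ae_on T (fun t => P t /\ Q t).
Proof.
  intros [N1 [H1 P1]] [N2 [H2 P2]]. exists (fun t => N1 t \/ N2 t). split; [apply null_union; auto|].
  intros t Ht Hn. split; [apply P1|apply P2]; auto.
Qed.

Lemma setup g l u T : extremal_pair l g u T ->
  exists N lam0, 0 <= lam0 /\ null_set N /\ (forall t, 0 <= t <= T -> ~ N t -> Good g l u lam0 t).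
Proof.
  intros [[HT [Hacg [Hu Hdg]]] [Hacl [Hnz [Hext [lam0 [Hl0 Hlam]]]]]].
  destruct (ae_and _ _ _ Hu (ae_and _ _ _ Hdg (ae_and _ _ _ Hext Hlam))) as [N [HN HP]].
  exists N, lam0. split; auto. split; auto.
  intros t Ht HNt. destruct (HP t Ht HNt) as [[Hu1 Hu2] [Hg [He [Hm1 Hm2]]]].
  assert (Hk : forall k, (k < 3)%nat -> exists dHp,
     derivable_pt_lim (fun s => Ham (l t) (setc k (g t) s) (u t)) (coord k (g t)) dHp /\
     derivable_pt_lim (fun s => coord k (l s)) t (- dHp)).
  { intros k Hk'. destruct (He k Hk') as [dHp [dHl [A1 [A2 [A3 A4]]]]]. eauto. }
  destruct (Hk 0%nat ltac:(lia)) as [d0 [D0 E0]].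
  destruct (Hk 1%nat ltac:(lia)) as [d1 [D1 E1]].
  destruct (Hk 2%nat ltac:(lia)) as [d2 [D2 E2]].
  assert (d0 = snd (u t) * Gf l 2 t / 2).
  { eapply uniqueness_limite; [exact D0|]. apply deriv_affine with
      (A := fst (u t) * (Gf l 0 t - Gf l 2 t * Gf g 1 t / 2) + snd (u t) * Gf l 1 t).
    intros s; unfold Ham, pairing, X1, X2, setc, Gf, coord, c0, Defs.c1, c2; simpl; field. }
  assert (d1 = - fst (u t) * Gf l 2 t / 2).
  { eapply uniqueness_limite; [exact D1|]. apply deriv_affine with
      (A := fst (u t) * Gf l 0 t + snd (u t) * (Gf l 1 t + Gf l 2 t * Gf g 0 t / 2)).
    intros s; unfold Ham, pairing, X1, X2, setc, Gf, coord, c0, Defs.c1, c2; simpl; field. }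
  assert (d2 = 0).
  { eapply uniqueness_limite; [exact D2|]. apply deriv_affine with
      (A := fst (u t) * (Gf l 0 t - Gf l 2 t * Gf g 1 t / 2) + snd (u t) * (Gf l 1 t + Gf l 2 t * Gf g 0 t / 2)).
    intros s; unfold Ham, pairing, X1, X2, setc, Gf, coord, c0, Defs.c1, c2; simpl; field. }
  subst d0 d1 d2.
  assert (G0 := Hg 0%nat ltac:(lia)). assert (G1 := Hg 1%nat ltac:(lia)). assert (G2 := Hg 2%nat ltac:(lia)).
  unfold Good. repeat split; auto.
  - eapply deriv_val; [exact G0|]. unfold combo, X1, X2, coord, c0, Defs.c1, c2; simpl; ring.
  - eapply deriv_val; [exact G1|]. unfold combo, X1, X2, coord, c0, Defs.c1, c2; simpl; ring.
  - eapply deriv_val; [exact G2|]. unfold combo, X1, X2, Gf, coord, c0, Defs.c1, c2; simpl; field.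
  - eapply deriv_val; [exact E0|]. field.
  - eapply deriv_val; [exact E1|]. field.
  - eapply deriv_val; [exact E2|]. ring.
Qed.


Definition Sett g l u lam0 T N := 0 <= T /\ abs_cont3 g 0 T /\ abs_cont3 l 0 T /\ null_set N /\ 0 <= lam0 /\
  (forall t, 0 <= t <= T -> ~ N t -> Good g l u lam0 t).

Definition sgn (s : R) := s = 1 \/ s = -1.

Lemma mul_le_abs u p : Rabs u <= 1 -> u * p <= Rabs p.
Proof.
  intros H. apply Rle_trans with (Rabs (u * p)); [apply Rle_abs|]. rewrite Rabs_mult.
  pose proof (Rabs_pos p); pose proof (Rabs_pos u); nra.
Qed.

Lemma sgn_u1 g l u lam0 t s : Good g l u lam0 t -> sgn s -> s * phi1 l g t > 0 -> fst (u t) = s.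
Proof.
  intros (_&_&_&_&_&_&H1&H2&H3&H4) Hs Hp.
  pose proof (mul_le_abs _ (phi2 l g t) H2). apply abs_le_inv in H1.
  destruct Hs as [->| ->]; [rewrite (Rabs_right (phi1 l g t)) in H4 by lra|rewrite (Rabs_left (phi1 l g t)) in H4 by lra]; nra.
Qed.
Lemma sgn_u2 g l u lam0 t s : Good g l u lam0 t -> sgn s -> s * phi2 l g t > 0 -> snd (u t) = s.
Proof.
  intros (_&_&_&_&_&_&H1&H2&H3&H4) Hs Hp.
  pose proof (mul_le_abs _ (phi1 l g t) H1). apply abs_le_inv in H2.
  destruct Hs as [->| ->]; [rewrite (Rabs_right (phi2 l g t)) in H4 by lra|rewrite (Rabs_left (phi2 l g t)) in H4 by lra]; nra.
Qed.


Lemma acg g l u lam0 T N k : Sett g l u lam0 T N -> (k < 3)%nat -> abs_cont (Gf g k) 0 T.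
Proof. intros (_&H&_) Hk. apply (H k Hk). Qed.
Lemma acl g l u lam0 T N k : Sett g l u lam0 T N -> (k < 3)%nat -> abs_cont (Gf l k) 0 T.
Proof. intros (_&_&H&_) Hk. apply (H k Hk). Qed.

Lemma l2_const g l u lam0 T N : Sett g l u lam0 T N -> forall t, 0 <= t <= T -> Gf l 2 t = Gf l 2 0.
Proof.
  intros HS t Ht. pose proof HS as (_&_&_&HN&_&HG).
  pose proof (core_eq (Gf l 2) 0 t 0 N ltac:(lra) (abs_cont_sub _ 0 T 0 t (acl _ _ _ _ _ _ 2 HS ltac:(lia)) ltac:(lra) ltac:(lra)) HN).
  rewrite H; [ring|]. intros s Hs HNs. apply (HG s ltac:(lra) HNs).
Qed.

Lemma lin1 g l u lam0 T N p q s2 : Sett g l u lam0 T N -> 0 <= p -> p <= q -> q <= T -> sgn s2 ->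
  (forall t, p < t < q -> s2 * phi2 l g t > 0) ->
  forall t, p <= t <= q ->
    Gf g 1 t = Gf g 1 p + s2 * (t - p) /\ Gf l 0 t = Gf l 0 p - Gf l 2 0 * s2 * (t - p) / 2.
Proof.
  intros HS Hp Hpq Hq Hs Hph t Ht. pose proof HS as (_&_&_&HN&_&HG).
  split.
  - apply (core_eq (Gf g 1) p t s2 N ltac:(lra) (abs_cont_sub _ 0 T p t (acg _ _ _ _ _ _ 1 HS ltac:(lia)) ltac:(lra) ltac:(lra)) HN).
    intros s Hs' HNs. pose proof (HG s ltac:(lra) HNs) as Hg.
    rewrite <- (sgn_u2 _ _ _ _ _ _ Hg Hs (Hph s ltac:(lra))). apply Hg.
  - pose proof (core_eq (Gf l 0) p t (- (Gf l 2 0 * s2) / 2) N ltac:(lra) (abs_cont_sub _ 0 T p t (acl _ _ _ _ _ _ 0 HS ltac:(lia)) ltac:(lra) ltac:(lra)) HN) as H.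
    rewrite H; [field|]. intros s Hs' HNs. pose proof (HG s ltac:(lra) HNs) as Hg.
    eapply deriv_val; [apply Hg|].
    rewrite (sgn_u2 _ _ _ _ _ _ Hg Hs (Hph s ltac:(lra))), (l2_const _ _ _ _ _ _ HS s ltac:(lra)). field.
Qed.

Lemma lin2 g l u lam0 T N p q s1 : Sett g l u lam0 T N -> 0 <= p -> p <= q -> q <= T -> sgn s1 ->
  (forall t, p < t < q -> s1 * phi1 l g t > 0) ->
  forall t, p <= t <= q ->
    Gf g 0 t = Gf g 0 p + s1 * (t - p) /\ Gf l 1 t = Gf l 1 p + Gf l 2 0 * s1 * (t - p) / 2.
Proof.
  intros HS Hp Hpq Hq Hs Hph t Ht. pose proof HS as (_&_&_&HN&_&HG).
  split.
  - apply (core_eq (Gf g 0) p t s1 N ltac:(lra) (abs_cont_sub _ 0 T p t (acg _ _ _ _ _ _ 0 HS ltac:(lia)) ltac:(lra) ltac:(lra)) HN).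
    intros s Hs' HNs. pose proof (HG s ltac:(lra) HNs) as Hg.
    rewrite <- (sgn_u1 _ _ _ _ _ _ Hg Hs (Hph s ltac:(lra))). apply Hg.
  - pose proof (core_eq (Gf l 1) p t ((Gf l 2 0 * s1) / 2) N ltac:(lra) (abs_cont_sub _ 0 T p t (acl _ _ _ _ _ _ 1 HS ltac:(lia)) ltac:(lra) ltac:(lra)) HN) as H.
    rewrite H; [field|]. intros s Hs' HNs. pose proof (HG s ltac:(lra) HNs) as Hg.
    eapply deriv_val; [apply Hg|].
    rewrite (sgn_u1 _ _ _ _ _ _ Hg Hs (Hph s ltac:(lra))), (l2_const _ _ _ _ _ _ HS s ltac:(lra)). field.
Qed.

Lemma phi1_lin g l u lam0 T N p q s2 : Sett g l u lam0 T N -> 0 <= p -> p <= q -> q <= T -> sgn s2 ->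
  (forall t, p < t < q -> s2 * phi2 l g t > 0) ->
  forall t, p <= t <= q -> phi1 l g t = phi1 l g p - Gf l 2 0 * s2 * (t - p).
Proof.
  intros HS Hp Hpq Hq Hs Hph t Ht. destruct (lin1 _ _ _ _ _ _ _ _ _ HS Hp Hpq Hq Hs Hph t Ht) as [A B].
  rewrite !phi1_eq, A, B, (l2_const _ _ _ _ _ _ HS t ltac:(lra)), (l2_const _ _ _ _ _ _ HS p ltac:(lra)). field.
Qed.
Lemma phi2_lin g l u lam0 T N p q s1 : Sett g l u lam0 T N -> 0 <= p -> p <= q -> q <= T -> sgn s1 ->
  (forall t, p < t < q -> s1 * phi1 l g t > 0) ->
  forall t, p <= t <= q -> phi2 l g t = phi2 l g p + Gf l 2 0 * s1 * (t - p).
Proof.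
  intros HS Hp Hpq Hq Hs Hph t Ht. destruct (lin2 _ _ _ _ _ _ _ _ _ HS Hp Hpq Hq Hs Hph t Ht) as [A B].
  rewrite !phi2_eq, A, B, (l2_const _ _ _ _ _ _ HS t ltac:(lra)), (l2_const _ _ _ _ _ _ HS p ltac:(lra)). field.
Qed.

Lemma lin3 g l u lam0 T N p q s1 s2 : Sett g l u lam0 T N -> 0 <= p -> p <= q -> q <= T -> sgn s1 -> sgn s2 ->
  (forall t, p < t < q -> s1 * phi1 l g t > 0 /\ s2 * phi2 l g t > 0) ->
  Gf g 2 q = Gf g 2 p + (q - p) * (- s1 * Gf g 1 p + s2 * Gf g 0 p) / 2.
Proof.
  intros HS Hp Hpq Hq Hs1 Hs2 Hph. pose proof HS as (_&_&_&HN&_&HG).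
  pose proof (core_eq (Gf g 2) p q ((- s1 * Gf g 1 p + s2 * Gf g 0 p) / 2) N Hpq (abs_cont_sub _ 0 T p q (acg _ _ _ _ _ _ 2 HS ltac:(lia)) ltac:(lra) ltac:(lra)) HN) as H.
  rewrite H; [field|]. intros s Hs' HNs. pose proof (HG s ltac:(lra) HNs) as Hg.
  eapply deriv_val; [apply Hg|].
  destruct (lin1 _ _ _ _ _ _ _ _ _ HS Hp Hpq Hq Hs2 (fun t Ht => proj2 (Hph t Ht)) s ltac:(lra)) as [A _].
  destruct (lin2 _ _ _ _ _ _ _ _ _ HS Hp Hpq Hq Hs1 (fun t Ht => proj1 (Hph t Ht)) s ltac:(lra)) as [B _].
  rewrite (sgn_u1 _ _ _ _ _ _ Hg Hs1 (proj1 (Hph s ltac:(lra)))), (sgn_u2 _ _ _ _ _ _ Hg Hs2 (proj2 (Hph s ltac:(lra)))), A, B.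
  field.
Qed.


Lemma sign_const (F : R -> R) x y : x < y -> (forall z, x < z < y -> cont F z /\ F z <> 0) ->
  exists s, sgn s /\ forall z, x < z < y -> s * F z > 0.
Proof.
  intros Hxy HF. set (m := (x + y) / 2).
  destruct (HF m ltac:(unfold m; lra)) as [_ Hm].
  assert (Hgen : forall s, sgn s -> s * F m > 0 -> forall z, x < z < y -> s * F z > 0).
  { intros s Hs Hsm z Hz. apply Rnot_le_lt. intros Hle.
    assert (Hsz : s * F z < 0).
    { destruct Hle as [Hl|He]; auto. exfalso. apply (proj2 (HF z Hz)).
      destruct Hs as [->| ->]; lra. }
    assert (Hc : forall w, x < w < y -> continuity_pt (fun v => s * F v) w).
    { intros w Hw. apply cont_continuity_pt, cont_scal, HF; auto. }
    assert (Hc' : forall w, x < w < y -> continuity_pt (fun v => - s * F v) w).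
    { intros w Hw. apply cont_continuity_pt, cont_scal, HF; auto. }
    destruct (Rlt_le_dec z m) as [Hzm|Hzm].
    - destruct (IVT_interv (fun v => s * F v) z m) as [w [Hw Hw0]].
      + intros w Hw; apply Hc; unfold m in *; lra.
      + auto.
      + auto.
      + lra.
      + apply (proj2 (HF w ltac:(unfold m in *; lra))). destruct Hs as [->| ->]; lra.
    - destruct Hzm as [Hzm|Hzm]; [|subst z; lra].
      destruct (IVT_interv (fun v => - s * F v) m z) as [w [Hw Hw0]].
      + intros w Hw; apply Hc'; unfold m in *; lra.
      + auto.
      + lra.
      + lra.
      + apply (proj2 (HF w ltac:(unfold m in *; lra))). destruct Hs as [->| ->]; lra. }
  destruct (Rlt_dec 0 (F m)).
  - exists 1. split; [left; auto|]. apply Hgen; [left; auto|lra].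
  - exists (-1). split; [right; auto|]. apply Hgen; [right; auto|].
    assert (F m < 0) by (destruct (Rtotal_order (F m) 0) as [|[|]]; auto; lra). lra.
Qed.

Lemma cont_ext_loc f h t d : 0 < d -> (forall s, Rabs (s - t) < d -> f s = h s) -> cont f t -> cont h t.
Proof.
  intros Hd He H eps Hep. destruct (H eps Hep) as [d' [Hd' H']].
  exists (Rmin d d'); split; [apply Rmin_glb_lt; auto|].
  intros s Hs. pose proof (Rmin_l d d'); pose proof (Rmin_r d d').
  rewrite <- (He s ltac:(lra)), <- (He t ltac:(rewrite Rminus_diag, Rabs_R0; lra)). apply H'; lra.
Qed.

Lemma cont_phi1 g l u lam0 T N t : Sett g l u lam0 T N -> 0 < t < T -> cont (phi1 l g) t.
Proof.
  intros HS Ht.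
  apply (cont_ext_loc (fun s => Gf l 0 s + (- Gf l 2 0 / 2) * Gf g 1 s) _ t (Rmin t (T - t))).
  - apply Rmin_glb_lt; lra.
  - intros s Hs. pose proof (Rmin_l t (T - t)); pose proof (Rmin_r t (T - t)). apply abs_lt_inv in Hs.
    rewrite phi1_eq, (l2_const _ _ _ _ _ _ HS s ltac:(lra)). field.
  - apply cont_plus; [|apply cont_scal]; eapply ac_cont; try eassumption;
      [apply (acl _ _ _ _ _ _ 0 HS); lia|apply (acg _ _ _ _ _ _ 1 HS); lia].
Qed.
Lemma cont_phi2 g l u lam0 T N t : Sett g l u lam0 T N -> 0 < t < T -> cont (phi2 l g) t.
Proof.
  intros HS Ht.
  apply (cont_ext_loc (fun s => Gf l 1 s + (Gf l 2 0 / 2) * Gf g 0 s) _ t (Rmin t (T - t))).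
  - apply Rmin_glb_lt; lra.
  - intros s Hs. pose proof (Rmin_l t (T - t)); pose proof (Rmin_r t (T - t)). apply abs_lt_inv in Hs.
    rewrite phi2_eq, (l2_const _ _ _ _ _ _ HS s ltac:(lra)). field.
  - apply cont_plus; [|apply cont_scal]; eapply ac_cont; try eassumption;
      [apply (acl _ _ _ _ _ _ 1 HS); lia|apply (acg _ _ _ _ _ _ 0 HS); lia].
Qed.

Lemma arc_sign g l u lam0 T N a b : Sett g l u lam0 T N -> max_regular_arc l g T a b ->
  exists s1 s2, sgn s1 /\ sgn s2 /\ forall t, a < t < b -> s1 * phi1 l g t > 0 /\ s2 * phi2 l g t > 0.
Proof.
  intros HS (Ha&Hab&Hb&Hreg&_).
  destruct (sign_const (phi1 l g) a b Hab) as [s1 [H1 H1']].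
  { intros z Hz. split; [apply (cont_phi1 _ _ _ _ _ _ _ HS); lra|apply (Hreg z Hz)]. }
  destruct (sign_const (phi2 l g) a b Hab) as [s2 [H2 H2']].
  { intros z Hz. split; [apply (cont_phi2 _ _ _ _ _ _ _ HS); lra|apply (Hreg z Hz)]. }
  exists s1, s2; split; [|split]; auto.
Qed.


Definition ArcD g l lam0 a b s1 s2 :=
  sgn s1 /\ sgn s2 /\ (forall t, a < t < b -> s1 * phi1 l g t > 0 /\ s2 * phi2 l g t > 0) /\
  (forall t, a <= t <= b -> s1 * phi1 l g t = s1 * phi1 l g a - Gf l 2 0 * s1 * s2 * (t - a) /\
                          s2 * phi2 l g t = s2 * phi2 l g a + Gf l 2 0 * s1 * s2 * (t - a)) /\
  s1 * phi1 l g a + s2 * phi2 l g a = lam0.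

Lemma abs_sgn s x : sgn s -> s * x > 0 -> Rabs x = s * x.
Proof. intros [-> | ->] H; [rewrite Rabs_right|rewrite Rabs_left]; lra. Qed.

Lemma sgn_sq s : sgn s -> s * s = 1.
Proof. intros [-> | ->]; ring. Qed.

Lemma arc_data g l u lam0 T N a b : Sett g l u lam0 T N -> max_regular_arc l g T a b ->
  exists s1 s2, ArcD g l lam0 a b s1 s2.
Proof.
  intros HS HM. destruct (arc_sign _ _ _ _ _ _ _ _ HS HM) as [s1 [s2 [Hs1 [Hs2 Hsg]]]].
  pose proof HM as (Ha&Hab&Hb&_). pose proof HS as (_&_&_&HN&_&HG).
  assert (Hf : forall t, a <= t <= b -> s1 * phi1 l g t = s1 * phi1 l g a - Gf l 2 0 * s1 * s2 * (t - a) /\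
                          s2 * phi2 l g t = s2 * phi2 l g a + Gf l 2 0 * s1 * s2 * (t - a)).
  { intros t Ht.
    rewrite (phi1_lin _ _ _ _ _ _ a b s2 HS Ha ltac:(lra) Hb Hs2 (fun t Ht => proj2 (Hsg t Ht)) t Ht).
    rewrite (phi2_lin _ _ _ _ _ _ a b s1 HS Ha ltac:(lra) Hb Hs1 (fun t Ht => proj1 (Hsg t Ht)) t Ht).
    split; ring. }
  exists s1, s2. split; [auto|split; [auto|split; [auto|split; [auto|]]]].
  destruct (nonnull N a b HN Hab) as [t0 [Ht0 HNt0]].
  pose proof (HG t0 ltac:(lra) HNt0) as (_&_&_&_&_&_&_&_&_&Hl).
  destruct (Hsg t0 Ht0) as [P1 P2].
  rewrite (abs_sgn s1 _ Hs1 P1), (abs_sgn s2 _ Hs2 P2) in Hl.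
  destruct (Hf t0 ltac:(lra)) as [F1 F2]. lra.
Qed.

Lemma arc_lam0 g l lam0 a b s1 s2 : a < b -> ArcD g l lam0 a b s1 s2 -> 0 < lam0.
Proof.
  intros Hab (Hs1&Hs2&Hsg&Hf&Hl). destruct (Hsg ((a+b)/2) ltac:(lra)) as [P1 P2].
  destruct (Hf ((a+b)/2) ltac:(lra)) as [F1 F2]. lra.
Qed.

Lemma end_left g l u lam0 T N a b : Sett g l u lam0 T N -> max_regular_arc l g T a b -> 0 < a ->
  phi1 l g a = 0 \/ phi2 l g a = 0.
Proof.
  intros HS (Ha&Hab&Hb&Hreg&Hmax) Ha0. apply NNPP; intros Hn.
  assert (N1 : phi1 l g a <> 0) by tauto. assert (N2 : phi2 l g a <> 0) by tauto.
  destruct (cont_nonzero _ _ (cont_phi1 _ _ _ _ _ _ a HS ltac:(lra)) N1) as [d1 [Hd1 H1]].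
  destruct (cont_nonzero _ _ (cont_phi2 _ _ _ _ _ _ a HS ltac:(lra)) N2) as [d2 [Hd2 H2]].
  set (d := Rmin a (Rmin d1 d2)).
  assert (0 < d /\ d <= a /\ d <= d1 /\ d <= d2).
  { unfold d. pose proof (Rmin_l a (Rmin d1 d2)); pose proof (Rmin_r a (Rmin d1 d2)).
    pose proof (Rmin_l d1 d2); pose proof (Rmin_r d1 d2). repeat split; try lra.
    repeat apply Rmin_glb_lt; lra. }
  destruct (Hmax (a - d) b ltac:(lra) Hb ltac:(lra) ltac:(lra)) as [E _]; [|lra].
  intros s Hs. destruct (Rle_dec s a) as [Hsa|Hsa].
  - assert (Rabs (s - a) < d1) by (apply abs_lt_intro; lra).
    assert (Rabs (s - a) < d2) by (apply abs_lt_intro; lra).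
    specialize (H1 s ltac:(auto)); specialize (H2 s ltac:(auto)).
    split; intros Hz; rewrite Hz in *; lra.
  - apply Hreg; lra.
Qed.

Lemma end_right g l u lam0 T N a b : Sett g l u lam0 T N -> max_regular_arc l g T a b -> b < T ->
  phi1 l g b = 0 \/ phi2 l g b = 0.
Proof.
  intros HS (Ha&Hab&Hb&Hreg&Hmax) Hb0. apply NNPP; intros Hn.
  assert (N1 : phi1 l g b <> 0) by tauto. assert (N2 : phi2 l g b <> 0) by tauto.
  destruct (cont_nonzero _ _ (cont_phi1 _ _ _ _ _ _ b HS ltac:(lra)) N1) as [d1 [Hd1 H1]].
  destruct (cont_nonzero _ _ (cont_phi2 _ _ _ _ _ _ b HS ltac:(lra)) N2) as [d2 [Hd2 H2]].
  set (d := Rmin (T - b) (Rmin d1 d2)).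
  assert (0 < d /\ d <= T - b /\ d <= d1 /\ d <= d2).
  { unfold d. pose proof (Rmin_l (T - b) (Rmin d1 d2)); pose proof (Rmin_r (T - b) (Rmin d1 d2)).
    pose proof (Rmin_l d1 d2); pose proof (Rmin_r d1 d2). repeat split; try lra.
    repeat apply Rmin_glb_lt; lra. }
  destruct (Hmax a (b + d) Ha ltac:(lra) ltac:(lra) ltac:(lra)) as [_ E]; [|lra].
  intros s Hs. destruct (Rle_dec b s) as [Hsa|Hsa].
  - assert (Rabs (s - b) < d1) by (apply abs_lt_intro; lra).
    assert (Rabs (s - b) < d2) by (apply abs_lt_intro; lra).
    specialize (H1 s ltac:(auto)); specialize (H2 s ltac:(auto)).
    split; intros Hz; rewrite Hz in *; lra.
  - apply Hreg; lra.
Qed.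

Lemma left_anal g l u lam0 T N a b s1 s2 : Sett g l u lam0 T N -> max_regular_arc l g T a b -> 0 < a ->
  ArcD g l lam0 a b s1 s2 ->
  (phi1 l g a = 0 /\ Gf l 2 0 * s1 * s2 < 0 /\ s2 * phi2 l g a = lam0) \/
  (phi2 l g a = 0 /\ Gf l 2 0 * s1 * s2 > 0 /\ s1 * phi1 l g a = lam0).
Proof.
  intros HS HM Ha HD. pose proof HM as (_&Hab&_).
  pose proof HD as (Hs1&Hs2&Hsg&Hf&Hl).
  destruct (Hsg ((a+b)/2) ltac:(lra)) as [P1 P2]. destruct (Hf ((a+b)/2) ltac:(lra)) as [F1 F2].
  set (k := Gf l 2 0 * s1 * s2) in *.
  destruct (end_left _ _ _ _ _ _ _ _ HS HM Ha) as [Z|Z]; rewrite Z in *.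
  - left. split; auto. split; [|lra]. assert (k * ((a+b)/2 - a) < 0) by lra.
    assert (0 < (a+b)/2 - a) by lra. nra.
  - right. split; auto. split; [|lra]. assert (k * ((a+b)/2 - a) > 0) by lra.
    assert (0 < (a+b)/2 - a) by lra. nra.
Qed.

Lemma right_anal g l u lam0 T N a b s1 s2 : Sett g l u lam0 T N -> max_regular_arc l g T a b -> b < T ->
  ArcD g l lam0 a b s1 s2 ->
  (phi1 l g b = 0 /\ Gf l 2 0 * s1 * s2 > 0 /\ s2 * phi2 l g b = lam0) \/
  (phi2 l g b = 0 /\ Gf l 2 0 * s1 * s2 < 0 /\ s1 * phi1 l g b = lam0).
Proof.
  intros HS HM Hb HD. pose proof HM as (_&Hab&_).
  pose proof HD as (Hs1&Hs2&Hsg&Hf&Hl).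
  destruct (Hsg ((a+b)/2) ltac:(lra)) as [P1 P2]. destruct (Hf ((a+b)/2) ltac:(lra)) as [F1 F2].
  destruct (Hf b ltac:(lra)) as [G1 G2].
  set (k := Gf l 2 0 * s1 * s2) in *.
  destruct (end_right _ _ _ _ _ _ _ _ HS HM Hb) as [Z|Z]; rewrite Z in *.
  - left. split; auto. split; [|lra]. assert (k * (b - (a+b)/2) > 0) by lra.
    assert (0 < b - (a+b)/2) by lra. nra.
  - right. split; auto. split; [|lra]. assert (k * (b - (a+b)/2) < 0) by lra.
    assert (0 < b - (a+b)/2) by lra. nra.
Qed.

Lemma abs_k c s1 s2 : sgn s1 -> sgn s2 -> Rabs (c * s1 * s2) = Rabs c.
Proof. intros [-> | ->] [-> | ->]; first [ (f_equal; ring) | (rewrite <- (Rabs_Ropp c); f_equal; ring) ]. Qed.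

Lemma interior_len g l u lam0 T N a b s1 s2 : Sett g l u lam0 T N -> max_regular_arc l g T a b -> 0 < a -> b < T ->
  ArcD g l lam0 a b s1 s2 -> Rabs (Gf l 2 0) * (b - a) = lam0.
Proof.
  intros HS HM Ha Hb HD.
  pose proof HD as (Hs1&Hs2&Hsg&Hf&Hl). destruct (Hf b) as [G1 G2]; [pose proof HM as (_&?&_); lra|].
  rewrite <- (abs_k _ s1 s2 Hs1 Hs2).
  destruct (left_anal _ _ _ _ _ _ _ _ _ _ HS HM Ha HD) as [(A1&A2&A3)|(A1&A2&A3)];
  destruct (right_anal _ _ _ _ _ _ _ _ _ _ HS HM Hb HD) as [(B1&B2&B3)|(B1&B2&B3)]; try lra.
  - rewrite Rabs_left by lra. rewrite A1, B1 in *. lra.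
  - rewrite Rabs_right by lra. rewrite A1, B1 in *. lra.
Qed.

Lemma junction g l u lam0 T N a b b' s1 s2 r1 r2 : Sett g l u lam0 T N ->
  max_regular_arc l g T a b -> max_regular_arc l g T b b' -> b < T ->
  ArcD g l lam0 a b s1 s2 -> ArcD g l lam0 b b' r1 r2 ->
  (r1 = - s1 /\ r2 = s2 /\ Gf l 2 0 * s1 * s2 > 0) \/ (r1 = s1 /\ r2 = - s2 /\ Gf l 2 0 * s1 * s2 < 0).
Proof.
  intros HS HM1 HM2 Hb HD1 HD2.
  pose proof HM1 as (Ha&Hab&_). pose proof HM2 as (_&Hbb&_).
  assert (Hl0 : 0 < lam0) by (eapply arc_lam0; eauto).
  pose proof HD1 as (Hs1&Hs2&_). pose proof HD2 as (Hr1&Hr2&_).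
  destruct (right_anal _ _ _ _ _ _ _ _ _ _ HS HM1 Hb HD1) as [(A1&A2&A3)|(A1&A2&A3)];
  destruct (left_anal _ _ _ _ _ _ _ _ _ _ HS HM2 ltac:(lra) HD2) as [(B1&B2&B3)|(B1&B2&B3)];
  rewrite ?A1, ?B1 in *; try lra.
  - left. destruct Hs1 as [-> | ->]; destruct Hs2 as [-> | ->]; destruct Hr1 as [-> | ->]; destruct Hr2 as [-> | ->];
      split; try split; try lra.
  - right. destruct Hs1 as [-> | ->]; destruct Hs2 as [-> | ->]; destruct Hr1 as [-> | ->]; destruct Hr2 as [-> | ->];
      split; try split; try lra.
Qed.

Lemma arc_g g l u lam0 T N a b s1 s2 : Sett g l u lam0 T N -> max_regular_arc l g T a b ->
  ArcD g l lam0 a b s1 s2 ->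
  Gf g 0 b = Gf g 0 a + s1 * (b - a) /\ Gf g 1 b = Gf g 1 a + s2 * (b - a) /\
  Gf g 2 b = Gf g 2 a + (b - a) * (- s1 * Gf g 1 a + s2 * Gf g 0 a) / 2.
Proof.
  intros HS HM HD. pose proof HM as (Ha&Hab&Hb&_). pose proof HD as (Hs1&Hs2&Hsg&_).
  split; [|split].
  - apply (lin2 _ _ _ _ _ _ a b s1 HS Ha ltac:(lra) Hb Hs1 (fun t Ht => proj1 (Hsg t Ht)) b ltac:(lra)).
  - apply (lin1 _ _ _ _ _ _ a b s2 HS Ha ltac:(lra) Hb Hs2 (fun t Ht => proj2 (Hsg t Ht)) b ltac:(lra)).
  - apply (lin3 _ _ _ _ _ _ a b s1 s2 HS Ha ltac:(lra) Hb Hs1 Hs2 Hsg).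
Qed.


Lemma overlap l g T a b a' b' t : max_regular_arc l g T a b -> max_regular_arc l g T a' b' ->
  a < t < b -> a' < t < b' -> a = a' /\ b = b'.
Proof.
  intros (Ha&Hab&Hb&Hreg&Hmax) (Ha'&Hab'&Hb'&Hreg'&Hmax') Ht Ht'.
  set (lo := Rmin a a'). set (hi := Rmax b b').
  assert (lo <= a /\ lo <= a' /\ (lo = a \/ lo = a')).
  { unfold lo, Rmin; destruct (Rle_dec a a'); lra. }
  assert (b <= hi /\ b' <= hi /\ (hi = b \/ hi = b')).
  { unfold hi, Rmax; destruct (Rle_dec b b'); lra. }
  assert (Hr : regular_on l g lo hi).
  { intros s Hs. destruct (Rlt_dec a s); destruct (Rlt_dec s b).
    - apply Hreg; lra.
    - apply Hreg'; lra.
    - apply Hreg'; lra.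
    - lra. }
  destruct (Hmax lo hi ltac:(lra) ltac:(lra) ltac:(lra) ltac:(lra) Hr).
  destruct (Hmax' lo hi ltac:(lra) ltac:(lra) ltac:(lra) ltac:(lra) Hr).
  lra.
Qed.

Lemma avoid_finite (F : list R) : forall x y, x < y -> exists t, x < t < y /\ ~ In t F.
Proof.
  induction F as [|f F IH]; intros x y Hxy.
  - exists ((x+y)/2). split; [lra| simpl; tauto].
  - destruct (Rlt_dec x f) as [H1|H1]; [destruct (Rlt_dec f y) as [H2|H2]|].
    + destruct (IH x f H1) as [t [Ht Hn]]. exists t. split; [lra|]. simpl. intros [E|E]; [lra|tauto].
    + destruct (IH x y Hxy) as [t [Ht Hn]]. exists t. split; [lra|]. simpl. intros [E|E]; [lra|tauto].
    + destruct (IH x y Hxy) as [t [Ht Hn]]. exists t. split; [lra|]. simpl. intros [E|E]; [lra|tauto].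
Qed.

Lemma max_snd (L : list (R*R)) : L <> nil -> exists ab, In ab L /\ forall cd, In cd L -> snd cd <= snd ab.
Proof.
  induction L as [|x L IH]; [congruence|]. intros _.
  destruct L as [|y L'].
  - exists x. split; [left; auto|]. intros cd [<-|[]]; lra.
  - destruct IH as [ab [Hin Hmax]]; [congruence|].
    destruct (Rle_dec (snd x) (snd ab)).
    + exists ab. split; [right; auto|]. intros cd [<-|H]; auto.
    + exists x. split; [left; auto|]. intros cd [<-|H]; [lra|]. specialize (Hmax cd H); lra.
Qed.

Definition ArcsH l g T (arcs : list (R*R)) (F : list R) :=
  (forall ab, In ab arcs -> max_regular_arc l g T (fst ab) (snd ab)) /\
  (forall t, 0 <= t <= T -> ~ In t F -> exists ab, In ab arcs /\ fst ab < t < snd ab).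

Lemma last_arc l g T arcs F : ArcsH l g T arcs F -> arcs <> nil -> exists a, In (a, T) arcs.
Proof.
  intros [Harcs Hcov] Hne. destruct (max_snd arcs Hne) as [[a b] [Hin Hmax]].
  pose proof (Harcs _ Hin) as (Ha&Hab&Hb&_). simpl in *.
  destruct (Req_dec b T) as [->|Hbt]; [eauto|].
  destruct (avoid_finite F b T ltac:(lra)) as [t [Ht Hn]].
  destruct (Hcov t ltac:(lra) Hn) as [cd [Hcd Ht']]. specialize (Hmax cd Hcd). lra.
Qed.

Lemma sgn_prod x y s : sgn s -> x * y > 0 -> s * y > 0 -> s * x > 0.
Proof. intros [-> | ->] H1 H2; nra. Qed.

Lemma prev_arc g l u lam0 T N arcs F a b : Sett g l u lam0 T N -> ArcsH l g T arcs F ->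
  In (a, b) arcs -> 0 < a -> exists a', In (a', a) arcs.
Proof.
  intros HS [Harcs Hcov] Hin Ha0.
  pose proof (Harcs _ Hin) as HM. simpl in HM. pose proof HM as (Ha&Hab&Hb&Hreg&Hmax).
  destruct (arc_data _ _ _ _ _ _ _ _ HS HM) as [s1 [s2 HD]].
  assert (Hl0 : 0 < lam0) by (eapply arc_lam0; eauto).
  pose proof HD as (Hs1&Hs2&_).
  assert (HR : exists d, 0 < d /\ d <= a /\ regular_on l g (a - d) a).
  { destruct (left_anal _ _ _ _ _ _ _ _ _ _ HS HM Ha0 HD) as [(A1&A2&A3)|(A1&A2&A3)].
    - assert (N2 : phi2 l g a <> 0) by (intros E; rewrite E in A3; lra).
      destruct (cont_nonzero _ _ (cont_phi2 _ _ _ _ _ _ a HS ltac:(lra)) N2) as [d [Hd H2]].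
      set (d' := Rmin (d/2) a). assert (0 < d' /\ d' <= a /\ d' <= d/2).
      { unfold d'. pose proof (Rmin_l (d/2) a); pose proof (Rmin_r (d/2) a). repeat split; try lra. apply Rmin_glb_lt; lra. }
      assert (Hsg : forall t, a - d' < t < a -> s2 * phi2 l g t > 0).
      { intros t Ht. apply (sgn_prod _ (phi2 l g a)); auto; [apply H2; apply abs_lt_intro; lra|lra]. }
      pose proof (phi1_lin _ _ _ _ _ _ (a - d') a s2 HS ltac:(lra) ltac:(lra) ltac:(lra) Hs2 Hsg) as HL.
      pose proof (HL a ltac:(lra)) as HLa. rewrite A1 in HLa.
      assert (Hc : Gf l 2 0 * s2 <> 0) by (intros E; assert (Gf l 2 0 * s1 * s2 = s1 * (Gf l 2 0 * s2)) as HH by ring; rewrite HH, E, Rmult_0_r in A2; lra).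
      exists d'. split; [lra|split; [lra|]]. intros t Ht. split.
      + rewrite (HL t ltac:(lra)). intros E.
        assert (Gf l 2 0 * s2 * (a - t) = 0) by lra.
        apply Rmult_integral in H0; destruct H0; [auto|lra].
      + intros E. specialize (Hsg t Ht). rewrite E in Hsg. lra.
    - assert (N1 : phi1 l g a <> 0) by (intros E; rewrite E in A3; lra).
      destruct (cont_nonzero _ _ (cont_phi1 _ _ _ _ _ _ a HS ltac:(lra)) N1) as [d [Hd H2]].
      set (d' := Rmin (d/2) a). assert (0 < d' /\ d' <= a /\ d' <= d/2).
      { unfold d'. pose proof (Rmin_l (d/2) a); pose proof (Rmin_r (d/2) a). repeat split; try lra. apply Rmin_glb_lt; lra. }
      assert (Hsg : forall t, a - d' < t < a -> s1 * phi1 l g t > 0).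
      { intros t Ht. apply (sgn_prod _ (phi1 l g a)); auto; [apply H2; apply abs_lt_intro; lra|lra]. }
      pose proof (phi2_lin _ _ _ _ _ _ (a - d') a s1 HS ltac:(lra) ltac:(lra) ltac:(lra) Hs1 Hsg) as HL.
      pose proof (HL a ltac:(lra)) as HLa. rewrite A1 in HLa.
      assert (Hc : Gf l 2 0 * s1 <> 0) by (intros E; assert (Gf l 2 0 * s1 * s2 = s2 * (Gf l 2 0 * s1)) as HH by ring; rewrite HH, E, Rmult_0_r in A2; lra).
      exists d'. split; [lra|split; [lra|]]. intros t Ht. split.
      + intros E. specialize (Hsg t Ht). rewrite E in Hsg. lra.
      + rewrite (HL t ltac:(lra)). intros E.
        assert (Gf l 2 0 * s1 * (a - t) = 0) by lra.
        apply Rmult_integral in H0; destruct H0; [auto|lra]. }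
  destruct HR as [d [Hd [Hda HR]]].
  destruct (avoid_finite F (a - d) a ltac:(lra)) as [t [Ht Hn]].
  destruct (Hcov t ltac:(lra) Hn) as [[a'' b''] [Hin'' Ht'']]. simpl in Ht''.
  pose proof (Harcs _ Hin'') as HM''. simpl in HM''. pose proof HM'' as (Ha''&Hab''&Hb''&Hreg''&Hmax'').
  exists a''.
  destruct (Rtotal_order b'' a) as [Hlt|[Heq|Hgt]].
  - exfalso. destruct (Hmax'' a'' a ltac:(lra) ltac:(lra) ltac:(lra) ltac:(lra)) as [_ E]; [|lra].
    intros s Hs. destruct (Rlt_dec s b''); [apply Hreg''; lra|apply HR; lra].
  - subst; auto.
  - exfalso. destruct (overlap l g T a b a'' b'' ((a + Rmin b b'')/2) HM HM'') as [E _].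
    + pose proof (Rmin_l b b''); pose proof (Rmin_r b b''). assert (a < Rmin b b'') by (apply Rmin_glb_lt; lra). lra.
    + pose proof (Rmin_l b b''); pose proof (Rmin_r b b''). assert (a < Rmin b b'') by (apply Rmin_glb_lt; lra). lra.
    + lra.
Qed.

Fixpoint tiles (T x : R) (Ch : list (R*R)) : Prop :=
  match Ch with nil => x = T | (a, b) :: r => a = x /\ tiles T b r end.

Lemma tiles_cover T (Ch : list (R*R)) : forall x, tiles T x Ch -> (forall ab, In ab Ch -> fst ab < snd ab) ->
  forall t, x < t < T -> ~ In t (map snd Ch) -> exists ab, In ab Ch /\ fst ab < t < snd ab.
Proof.
  induction Ch as [|[a b] Ch IH]; simpl; intros x Ht Hpos t Hxt Hn.
  - lra.
  - destruct Ht as [-> Ht]. destruct (Rtotal_order t b) as [H|[H|H]].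
    + exists (x, b). split; [left; auto|simpl; lra].
    + exfalso; apply Hn; left; auto.
    + destruct (IH b Ht (fun ab H => Hpos ab (or_intror H)) t ltac:(lra) (fun H => Hn (or_intror H))) as [ab [H1 H2]].
      exists ab; auto.
Qed.

Lemma count l g T arcs F Ch : ArcsH l g T arcs F -> NoDup arcs -> tiles T 0 Ch -> incl Ch arcs ->
  (length arcs <= length Ch)%nat.
Proof.
  intros [Harcs Hcov] Hnd Ht Hinc. apply NoDup_incl_length; auto.
  intros [a b] Hin. pose proof (Harcs _ Hin) as HM. simpl in HM. pose proof HM as (Ha&Hab&Hb&_).
  destruct (avoid_finite (map snd Ch) a b Hab) as [t [Hta Hn]].
  destruct (tiles_cover T Ch 0 Ht (fun ab H => proj1 (proj2 (Harcs ab (Hinc ab H)))) t ltac:(lra) Hn) as [[a' b'] [H1 H2]].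
  simpl in H2. pose proof (Harcs _ (Hinc _ H1)) as HM'. simpl in HM'.
  destruct (overlap l g T a b a' b' t HM HM' ltac:(lra) H2) as [-> ->]. auto.
Qed.


Lemma lip_concat f a b c K : lip f a b K -> lip f b c K -> lip f a c K.
Proof.
  intros H1 H2 x y Hx Hxy Hy.
  destruct (Rle_dec y b). { apply H1; lra. }
  destruct (Rle_dec b x). { apply H2; lra. }
  specialize (H1 x b ltac:(lra) ltac:(lra) ltac:(lra)). specialize (H2 b y ltac:(lra) ltac:(lra) ltac:(lra)).
  replace (f y - f x) with ((f y - f b) + (f b - f x)) by ring.
  pose proof (Rabs_triang (f y - f b) (f b - f x)). lra.
Qed.
Lemma lip_ext f h a b K : (forall t, a <= t <= b -> f t = h t) -> lip h a b K -> lip f a b K.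
Proof. intros He H x y Hx Hxy Hy. rewrite !He by lra. auto. Qed.
Lemma lip_mono f a b K K' : K <= K' -> lip f a b K -> lip f a b K'.
Proof. intros HK H x y Hx Hxy Hy. specialize (H x y Hx Hxy Hy). nra. Qed.
Lemma lip_sub f a b a' b' K : lip f a b K -> a <= a' -> b' <= b -> lip f a' b' K.
Proof. intros H Ha Hb x y Hx Hxy Hy. apply H; lra. Qed.
Lemma lip_affine A B a b : lip (fun t => A + B*t) a b (Rabs B).
Proof. intros x y _ Hxy _. replace (A + B*y - (A + B*x)) with (B * (y - x)) by ring.
  rewrite Rabs_mult, (Rabs_right (y - x)) by lra. lra. Qed.

Lemma deriv_loc f h t d del : 0 < del -> (forall s, Rabs (s - t) < del -> h s = f s) ->
  derivable_pt_lim f t d -> derivable_pt_lim h t d.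
Proof.
  intros Hdel He Hf eps Heps. destruct (Hf eps Heps) as [dl Hdl].
  assert (Hp : 0 < Rmin dl del) by (apply Rmin_glb_lt; [apply cond_pos|auto]).
  exists (mkposreal _ Hp). intros h0 Hh0 Hlt. simpl in Hlt.
  pose proof (Rmin_l dl del); pose proof (Rmin_r dl del).
  rewrite (He (t + h0)) by (replace (t + h0 - t) with h0 by ring; lra).
  rewrite (He t) by (rewrite Rminus_diag, Rabs_R0; lra).
  apply Hdl; auto; lra.
Qed.

Definition seg (P : R3) (w : R*R) (s : R) : R3 :=
  (c0 P + fst w * s, Defs.c1 P + snd w * s, c2 P + s * (- fst w * Defs.c1 P + snd w * c0 P) / 2).

Definition slope (P : R3) (w : R*R) (k : nat) : R :=
  match k with 0%nat => fst w | 1%nat => snd w | _ => (- fst w * Defs.c1 P + snd w * c0 P) / 2 end.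

Lemma seg_coord P w s k : coord k (seg P w s) = coord k P + slope P w k * s.
Proof. destruct k as [|[|k]]; unfold seg, slope, coord, c0, Defs.c1, c2; simpl; field. Qed.

Lemma seg0 P w : seg P w 0 = P.
Proof. destruct P as [[x y] z]. unfold seg, c0, Defs.c1, c2; simpl. apply injective_projections; simpl; [apply injective_projections; simpl|]; field. Qed.

Lemma combo_seg P w s k : coord k (combo w (seg P w s)) = slope P w k.
Proof. destruct k as [|[|k]]; unfold combo, seg, slope, X1, X2, coord, c0, Defs.c1, c2; simpl; field. Qed.

Definition bnd (P : R3) (w : R*R) := Rabs (fst w) + Rabs (snd w) + Rabs ((- fst w * Defs.c1 P + snd w * c0 P) / 2).

Lemma slope_bnd P w k : Rabs (slope P w k) <= bnd P w.
Proof.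
  unfold bnd. pose proof (Rabs_pos (fst w)); pose proof (Rabs_pos (snd w));
  pose proof (Rabs_pos ((- fst w * Defs.c1 P + snd w * c0 P) / 2)).
  destruct k as [|[|k]]; simpl; lra.
Qed.

Lemma piece_lip (G : R -> R3) P w al be k : al <= be ->
  (forall s, al <= s <= be -> G s = seg P w (s - al)) -> lip (fun s => coord k (G s)) al be (bnd P w).
Proof.
  intros Hab He. eapply lip_mono; [apply (slope_bnd P w k)|].
  apply (lip_ext _ (fun s => (coord k P - slope P w k * al) + slope P w k * s)); [|apply lip_affine].
  intros t Ht. rewrite He by auto. rewrite seg_coord. ring.
Qed.

Lemma piece_deriv (G : R -> R3) P w al be t k : al < t < be ->
  (forall s, al < s < be -> G s = seg P w (s - al)) ->
  derivable_pt_lim (fun s => coord k (G s)) t (coord k (combo w (G t))).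
Proof.
  intros Ht He. rewrite He by auto. rewrite combo_seg.
  apply (deriv_loc (fun s => (coord k P - slope P w k * al) + slope P w k * s) _ t _ (Rmin (t - al) (be - t))).
  - apply Rmin_glb_lt; lra.
  - intros s Hs. pose proof (Rmin_l (t - al) (be - t)); pose proof (Rmin_r (t - al) (be - t)).
    apply abs_lt_inv in Hs. rewrite He by lra. rewrite seg_coord. ring.
  - apply deriv_affine with (A := coord k P - slope P w k * al). auto.
Qed.


Lemma R3_ext (P Q : R3) : c0 P = c0 Q -> Defs.c1 P = Defs.c1 Q -> c2 P = c2 Q -> P = Q.
Proof. destruct P as [[x y] z], Q as [[x' y'] z']. unfold c0, Defs.c1, c2; simpl. intros -> -> ->; auto. Qed.

Lemma arc_g_seg g l u lam0 T N a b s1 s2 : Sett g l u lam0 T N -> max_regular_arc l g T a b ->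
  ArcD g l lam0 a b s1 s2 -> g b = seg (g a) (s1, s2) (b - a).
Proof.
  intros HS HM HD. destruct (arc_g _ _ _ _ _ _ _ _ _ _ HS HM HD) as (A&B&C).
  unfold Gf, coord in A, B, C. apply R3_ext; unfold seg; simpl; [rewrite A|rewrite B|rewrite C]; unfold c0, Defs.c1, c2; simpl; ring.
Qed.

Lemma final_alg P a1 a2 b1 b2 tau s6 : sgn a1 -> sgn a2 ->
  ((b1 = - a1 /\ b2 = a2) \/ (b1 = a1 /\ b2 = - a2)) -> 0 < tau -> 0 < s6 ->
  seg (seg (seg (seg P (-a1,-a2) tau) (-b1,-b2) (tau*tau/(s6+tau))) (a1,a2) (s6+tau)) (b1,b2) (tau*tau/(s6+tau)) =
  seg (seg (seg (seg (seg P (a1,a2) tau) (b1,b2) tau) (-a1,-a2) tau) (-b1,-b2) tau) (a1,a2) s6.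
Proof.
  intros Ha1 Ha2 Hb Ht Hs. destruct P as [[x y] z].
  apply R3_ext; unfold seg, c0, Defs.c1, c2; simpl;
  destruct Ha1 as [-> | ->]; destruct Ha2 as [-> | ->]; destruct Hb as [[-> ->]|[-> ->]]; field; lra.
Qed.

Lemma abs_comb u1 u2 x y : Rabs u1 <= 1 -> Rabs u2 <= 1 ->
  Rabs (- u1 * y / 2 + u2 * x / 2) <= (Rabs y + Rabs x) / 2.
Proof.
  intros H1 H2. apply Rle_trans with (Rabs (- u1 * y / 2) + Rabs (u2 * x / 2)); [apply Rabs_triang|].
  unfold Rdiv. rewrite !Rabs_mult, Rabs_Ropp. rewrite (Rabs_right (/2)) by lra.
  pose proof (Rabs_pos x); pose proof (Rabs_pos y). nra.
Qed.

Lemma lip_g01 g l u lam0 T N k : Sett g l u lam0 T N -> (k < 2)%nat -> lip (Gf g k) 0 T 1.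
Proof.
  intros HS Hk x y Hx Hxy Hy. pose proof HS as (_&_&_&HN&_&HG).
  apply (core_abs (Gf g k) x y 1 N Hxy (abs_cont_sub _ 0 T x y (acg _ _ _ _ _ _ k HS ltac:(lia)) Hx Hy) HN).
  intros s Hs HNs. pose proof (HG s ltac:(lra) HNs) as (D0&D1&_&_&_&_&U1&U2&_).
  destruct k as [|[|k]]; [exists (fst (u s))|exists (snd (u s))|lia]; auto.
Qed.

Lemma lip_g2 g l u lam0 T N : Sett g l u lam0 T N ->
  lip (Gf g 2) 0 T ((Rabs (Gf g 1 0) + Rabs (Gf g 0 0) + 2 * T) / 2).
Proof.
  intros HS x y Hx Hxy Hy. pose proof HS as (_&_&_&HN&_&HG).
  apply (core_abs (Gf g 2) x y _ N Hxy (abs_cont_sub _ 0 T x y (acg _ _ _ _ _ _ 2 HS ltac:(lia)) Hx Hy) HN).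
  intros s Hs HNs. pose proof (HG s ltac:(lra) HNs) as (_&_&D2&_&_&_&U1&U2&_).
  eexists; split; [exact D2|].
  eapply Rle_trans; [apply abs_comb; auto|].
  pose proof (lip_g01 _ _ _ _ _ _ 0 HS ltac:(lia) 0 s ltac:(lra) ltac:(lra) ltac:(lra)).
  pose proof (lip_g01 _ _ _ _ _ _ 1 HS ltac:(lia) 0 s ltac:(lra) ltac:(lra) ltac:(lra)).
  pose proof (Rabs_triang_inv (Gf g 0 s) (Gf g 0 0)).
  pose proof (Rabs_triang_inv (Gf g 1 s) (Gf g 1 0)).
  lra.
Qed.


Lemma step g l u lam0 T N arcs F a b : Sett g l u lam0 T N -> ArcsH l g T arcs F -> In (a, b) arcs ->
  a = 0 \/ (0 < a /\ exists a', In (a', a) arcs).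
Proof.
  intros HS HA Hin. pose proof (proj1 HA _ Hin) as (Ha&_). simpl in Ha.
  destruct Ha as [Ha|Ha]; [right; split; auto; eapply prev_arc; eauto|left; auto].
Qed.

Lemma MAof l g T arcs F a b : ArcsH l g T arcs F -> In (a, b) arcs -> max_regular_arc l g T a b.
Proof. intros HA Hin. exact (proj1 HA _ Hin). Qed.

Lemma chain5 g l u lam0 T N arcs F n : Sett g l u lam0 T N -> ArcsH l g T arcs F -> NoDup arcs ->
  length arcs = n -> (5 < n)%nat ->
  exists e1 e2 e3 e4 e5, 0 < e1 /\ In (e1, e2) arcs /\ In (e2, e3) arcs /\ In (e3, e4) arcs /\
    In (e4, e5) arcs /\ In (e5, T) arcs.
Proof.
  intros HS HA Hnd Hlen Hn.
  destruct (last_arc _ _ _ _ _ HA) as [e5 H5]; [intros E; subst; simpl in Hn; lia|].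
  assert (Hc : forall Ch, tiles T 0 Ch -> incl Ch arcs -> (length Ch <= 5)%nat -> False).
  { intros Ch Ht Hi Hl. pose proof (count _ _ _ _ _ Ch HA Hnd Ht Hi). lia. }
  destruct (step _ _ _ _ _ _ _ _ _ _ HS HA H5) as [E|[P5 [e4 H4]]].
  { subst. exfalso. apply (Hc ((0,T)::nil)); [simpl; auto|intros x Hx; simpl in Hx; intuition (subst; auto)|simpl; lia]. }
  destruct (step _ _ _ _ _ _ _ _ _ _ HS HA H4) as [E|[P4 [e3 H3]]].
  { subst. exfalso. apply (Hc ((0,e5)::(e5,T)::nil)); [simpl; auto|intros x Hx; simpl in Hx; intuition (subst; auto)|simpl; lia]. }
  destruct (step _ _ _ _ _ _ _ _ _ _ HS HA H3) as [E|[P3 [e2 H2]]].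
  { subst. exfalso. apply (Hc ((0,e4)::(e4,e5)::(e5,T)::nil)); [simpl; auto|intros x Hx; simpl in Hx; intuition (subst; auto)|simpl; lia]. }
  destruct (step _ _ _ _ _ _ _ _ _ _ HS HA H2) as [E|[P2 [e1 H1]]].
  { subst. exfalso. apply (Hc ((0,e3)::(e3,e4)::(e4,e5)::(e5,T)::nil)); [simpl; auto|intros x Hx; simpl in Hx; intuition (subst; auto)|simpl; lia]. }
  destruct (step _ _ _ _ _ _ _ _ _ _ HS HA H1) as [E|[P1 _]].
  { subst. exfalso. apply (Hc ((0,e2)::(e2,e3)::(e3,e4)::(e4,e5)::(e5,T)::nil)); [simpl; repeat split|intros x Hx; simpl in Hx; intuition (subst; auto)|simpl; lia]. }
  exists e1, e2, e3, e4, e5. repeat split; auto.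
Qed.


Lemma good_deriv g l u lam0 t k : Good g l u lam0 t -> (k < 3)%nat ->
  derivable_pt_lim (Gf g k) t (coord k (combo (u t) (g t))).
Proof.
  intros (D0&D1&D2&_) Hk. destruct k as [|[|[|k]]]; [| | |lia]; eapply deriv_val; eauto;
  unfold combo, X1, X2, Gf, coord, c0, Defs.c1, c2; simpl; field.
Qed.

Lemma sgn_abs s : sgn s -> Rabs s <= 1 /\ Rabs (- s) <= 1.
Proof. intros [-> | ->]; split; unfold Rabs; destruct Rcase_abs; lra. Qed.

Lemma rel_junctions c a1 a2 b1 b2 d1 d2 f1 f2 h1 h2 : sgn a1 -> sgn a2 -> sgn b1 -> sgn b2 ->
  (b1 = - a1 /\ b2 = a2 /\ c * a1 * a2 > 0) \/ (b1 = a1 /\ b2 = - a2 /\ c * a1 * a2 < 0) ->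
  (d1 = - b1 /\ d2 = b2 /\ c * b1 * b2 > 0) \/ (d1 = b1 /\ d2 = - b2 /\ c * b1 * b2 < 0) ->
  (f1 = - d1 /\ f2 = d2 /\ c * d1 * d2 > 0) \/ (f1 = d1 /\ f2 = - d2 /\ c * d1 * d2 < 0) ->
  (h1 = - f1 /\ h2 = f2 /\ c * f1 * f2 > 0) \/ (h1 = f1 /\ h2 = - f2 /\ c * f1 * f2 < 0) ->
  ((b1 = - a1 /\ b2 = a2) \/ (b1 = a1 /\ b2 = - a2)) /\ d1 = - a1 /\ d2 = - a2 /\ f1 = - b1 /\ f2 = - b2 /\
  h1 = a1 /\ h2 = a2.
Proof.
  intros Ha1 Ha2 Hb1 Hb2 J1 J2 J3 J4.
  destruct J1 as [(->&->&K1)|(->&->&K1)]; destruct J2 as [(->&->&K2)|(->&->&K2)];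
  destruct J3 as [(->&->&K3)|(->&->&K3)]; destruct J4 as [(->&->&K4)|(->&->&K4)];
  try (exfalso; nra); repeat split; try lra.
Qed.


Theorem mainTheorem5 (g : R -> R3) (T : R) (n : nat) :
  regular_bang_bang_arcs g T n -> (5 < n)%nat -> ~ time_minimizer g T.
Proof.
  intros [u [l [arcs [F [HE [Hnd [Hlen [Harcs Hcov]]]]]]]] Hn HTM.
  destruct (setup g l u T HE) as [N [lam0 [Hl0 [HN HG]]]].
  pose proof HE as [[HT [Hacg _]] [Hacl _]].
  assert (HS : Sett g l u lam0 T N) by exact (conj HT (conj Hacg (conj Hacl (conj HN (conj Hl0 HG))))). 
  assert (HA : ArcsH l g T arcs F) by (split; auto).
  destruct (chain5 _ _ _ _ _ _ _ _ _ HS HA Hnd Hlen Hn) as (e1&e2&e3&e4&e5&He1&I2&I3&I4&I5&I6).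
  pose proof (MAof _ _ _ _ _ _ _ HA I2) as M2. pose proof (MAof _ _ _ _ _ _ _ HA I3) as M3.
  pose proof (MAof _ _ _ _ _ _ _ HA I4) as M4. pose proof (MAof _ _ _ _ _ _ _ HA I5) as M5.
  pose proof (MAof _ _ _ _ _ _ _ HA I6) as M6.
  pose proof M2 as (_&L2&_). pose proof M3 as (_&L3&_). pose proof M4 as (_&L4&_).
  pose proof M5 as (_&L5&_). pose proof M6 as (_&L6&_).
  destruct (arc_data _ _ _ _ _ _ _ _ HS M2) as [a1 [a2 D2]].
  destruct (arc_data _ _ _ _ _ _ _ _ HS M3) as [b1 [b2 D3]].
  destruct (arc_data _ _ _ _ _ _ _ _ HS M4) as [d1 [d2 D4]].
  destruct (arc_data _ _ _ _ _ _ _ _ HS M5) as [f1 [f2 D5]].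
  destruct (arc_data _ _ _ _ _ _ _ _ HS M6) as [h1 [h2 D6]].
  assert (Hlam : 0 < lam0) by (eapply arc_lam0; [exact L2|exact D2]).
  pose proof (interior_len _ _ _ _ _ _ _ _ _ _ HS M2 ltac:(lra) ltac:(lra) D2) as IL2.
  pose proof (interior_len _ _ _ _ _ _ _ _ _ _ HS M3 ltac:(lra) ltac:(lra) D3) as IL3.
  pose proof (interior_len _ _ _ _ _ _ _ _ _ _ HS M4 ltac:(lra) ltac:(lra) D4) as IL4.
  pose proof (interior_len _ _ _ _ _ _ _ _ _ _ HS M5 ltac:(lra) ltac:(lra) D5) as IL5.
  assert (Hc : Rabs (Gf l 2 0) <> 0) by (intros E; rewrite E in IL2; lra).
  set (tau := e2 - e1).
  assert (E3 : e3 - e2 = tau) by (apply (Rmult_eq_reg_l (Rabs (Gf l 2 0))); [unfold tau; lra|auto]).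
  assert (E4 : e4 - e3 = tau) by (apply (Rmult_eq_reg_l (Rabs (Gf l 2 0))); [unfold tau; lra|auto]).
  assert (E5 : e5 - e4 = tau) by (apply (Rmult_eq_reg_l (Rabs (Gf l 2 0))); [unfold tau; lra|auto]).
  assert (Htau : 0 < tau) by (unfold tau; lra).
  pose proof (junction _ _ _ _ _ _ _ _ _ _ _ _ _ HS M2 M3 ltac:(lra) D2 D3) as J1.
  pose proof (junction _ _ _ _ _ _ _ _ _ _ _ _ _ HS M3 M4 ltac:(lra) D3 D4) as J2.
  pose proof (junction _ _ _ _ _ _ _ _ _ _ _ _ _ HS M4 M5 ltac:(lra) D4 D5) as J3.
  pose proof (junction _ _ _ _ _ _ _ _ _ _ _ _ _ HS M5 M6 ltac:(lra) D5 D6) as J4.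
  pose proof (arc_g_seg _ _ _ _ _ _ _ _ _ _ HS M2 D2) as G2.
  pose proof (arc_g_seg _ _ _ _ _ _ _ _ _ _ HS M3 D3) as G3.
  pose proof (arc_g_seg _ _ _ _ _ _ _ _ _ _ HS M4 D4) as G4.
  pose proof (arc_g_seg _ _ _ _ _ _ _ _ _ _ HS M5 D5) as G5.
  pose proof (arc_g_seg _ _ _ _ _ _ _ _ _ _ HS M6 D6) as G6.
  pose proof D2 as (Ha1&Ha2&_). pose proof D3 as (Hb1&Hb2&_).
  destruct (rel_junctions _ _ _ _ _ _ _ _ _ _ _ Ha1 Ha2 Hb1 Hb2 J1 J2 J3 J4) as (Hb&->&->&->&->&->&->).
  set (s6 := T - e5).
  assert (Hs6 : 0 < s6) by (unfold s6; lra).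
  set (r := tau * tau / (s6 + tau)).
  assert (Hr0 : 0 < r) by (unfold r; apply Rdiv_lt_0_compat; nra).
  assert (Hr1 : r * (s6 + tau) = tau * tau) by (unfold r; field; lra).
  assert (Hrt : r < tau) by nra.
  set (P0 := g e1). set (q1 := (-a1, -a2)). set (q2 := (-b1, -b2)). set (q3 := (a1, a2)). set (q4 := (b1, b2)).
  set (T1 := e1 + tau). set (T2 := T1 + r). set (T3 := T2 + (s6 + tau)). set (T' := T3 + r).
  set (P1 := seg P0 q1 tau). set (P2 := seg P1 q2 r). set (P3 := seg P2 q3 (s6 + tau)).
  pose (g' := fun t => if Rle_dec t e1 then g t else if Rle_dec t T1 then seg P0 q1 (t - e1)
     else if Rle_dec t T2 then seg P1 q2 (t - T1) else if Rle_dec t T3 then seg P2 q3 (t - T2)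
     else seg P3 q4 (t - T3)).
  pose (u' := fun t => if Rle_dec t e1 then u t else if Rle_dec t T1 then q1
     else if Rle_dec t T2 then q2 else if Rle_dec t T3 then q3 else q4).
  assert (Eq0 : forall s, s <= e1 -> g' s = g s).
  { intros s Hs; unfold g'; destruct (Rle_dec s e1); [auto|lra]. }
  assert (Eq1 : forall s, e1 <= s <= T1 -> g' s = seg P0 q1 (s - e1)).
  { intros s Hs; unfold g'; destruct (Rle_dec s e1).
    - assert (s = e1) as -> by lra. rewrite Rminus_diag, seg0; auto.
    - destruct (Rle_dec s T1); [auto|lra]. }
  assert (Eq2 : forall s, T1 <= s <= T2 -> g' s = seg P1 q2 (s - T1)).
  { intros s Hs; unfold g'; destruct (Rle_dec s e1); [unfold T1 in *; lra|].
    destruct (Rle_dec s T1).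
    - assert (s = T1) as -> by lra. rewrite Rminus_diag, seg0. unfold P1; f_equal; unfold T1; ring.
    - destruct (Rle_dec s T2); [auto|lra]. }
  assert (Eq3 : forall s, T2 <= s <= T3 -> g' s = seg P2 q3 (s - T2)).
  { intros s Hs; unfold g'; destruct (Rle_dec s e1); [unfold T2, T1 in *; lra|].
    destruct (Rle_dec s T1); [unfold T2 in *; lra|].
    destruct (Rle_dec s T2).
    - assert (s = T2) as -> by lra. rewrite Rminus_diag, seg0. unfold P2; f_equal; unfold T2; ring.
    - destruct (Rle_dec s T3); [auto|lra]. }
  assert (Eq4 : forall s, T3 <= s -> g' s = seg P3 q4 (s - T3)).
  { intros s Hs; unfold g'; destruct (Rle_dec s e1); [unfold T3, T2, T1 in *; lra|].
    destruct (Rle_dec s T1); [unfold T3, T2 in *; lra|].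
    destruct (Rle_dec s T2); [unfold T3 in *; lra|].
    destruct (Rle_dec s T3).
    - assert (s = T3) as -> by lra. rewrite Rminus_diag, seg0. unfold P3; f_equal; unfold T3; ring.
    - auto. }
  assert (U0 : forall s, s <= e1 -> u' s = u s).
  { intros s Hs; unfold u'; destruct (Rle_dec s e1); [auto|lra]. }
  assert (U1 : forall s, e1 < s <= T1 -> u' s = q1).
  { intros s Hs; unfold u'; destruct (Rle_dec s e1); [lra|]. destruct (Rle_dec s T1); [auto|lra]. }
  assert (U2 : forall s, T1 < s <= T2 -> u' s = q2).
  { intros s Hs; unfold u'; destruct (Rle_dec s e1); [unfold T1 in *; lra|].
    destruct (Rle_dec s T1); [lra|]. destruct (Rle_dec s T2); [auto|lra]. }
  assert (U3 : forall s, T2 < s <= T3 -> u' s = q3).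
  { intros s Hs; unfold u'; destruct (Rle_dec s e1); [unfold T2, T1 in *; lra|].
    destruct (Rle_dec s T1); [unfold T2 in *; lra|]. destruct (Rle_dec s T2); [lra|].
    destruct (Rle_dec s T3); [auto|lra]. }
  assert (U4 : forall s, T3 < s -> u' s = q4).
  { intros s Hs; unfold u'; destruct (Rle_dec s e1); [unfold T3, T2, T1 in *; lra|].
    destruct (Rle_dec s T1); [unfold T3, T2 in *; lra|]. destruct (Rle_dec s T2); [unfold T3 in *; lra|].
    destruct (Rle_dec s T3); [lra|auto]. }
  assert (HT5 : T = e1 + 4 * tau + s6) by (unfold s6, tau in *; lra).
  apply HTM. exists g', u', T'.
  split; [unfold T', T3, T2, T1; lra|].
  split; [|split].
  - split; [unfold T', T3, T2, T1; lra|].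
    assert (Hbnd : forall P w, 0 <= bnd P w).
    { intros P w; unfold bnd; pose proof (Rabs_pos (fst w)); pose proof (Rabs_pos (snd w));
      pose proof (Rabs_pos ((- fst w * Defs.c1 P + snd w * c0 P) / 2)); lra. }
    set (Kg2 := (Rabs (Gf g 1 0) + Rabs (Gf g 0 0) + 2 * T) / 2).
    assert (HKg2 : 0 <= Kg2) by (unfold Kg2; pose proof (Rabs_pos (Gf g 1 0)); pose proof (Rabs_pos (Gf g 0 0)); lra).
    set (K := 1 + 1 + Kg2 + bnd P0 q1 + bnd P1 q2 + bnd P2 q3 + bnd P3 q4).
    pose proof (Hbnd P0 q1); pose proof (Hbnd P1 q2); pose proof (Hbnd P2 q3); pose proof (Hbnd P3 q4).
    split; [|split].
    + intros k Hk. apply (lip_ac _ 0 T' K); [unfold K; lra|].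
      apply lip_concat with e1.
      { apply (lip_ext _ (Gf g k)).
        { intros t Ht. cbv beta. rewrite Eq0 by lra. reflexivity. }
        destruct k as [|[|[|k]]]; [| | |lia].
        - eapply lip_mono; [|apply (lip_sub _ 0 T); [apply (lip_g01 _ _ _ _ _ _ 0 HS); lia|lra|lra]]. unfold K; lra.
        - eapply lip_mono; [|apply (lip_sub _ 0 T); [apply (lip_g01 _ _ _ _ _ _ 1 HS); lia|lra|lra]]. unfold K; lra.
        - eapply lip_mono; [|apply (lip_sub _ 0 T); [apply (lip_g2 _ _ _ _ _ _ HS)|lra|lra]]. unfold K, Kg2; lra. }
      apply lip_concat with T1.
      { eapply lip_mono; [|apply (piece_lip g' P0 q1 e1 T1 k); [unfold T1; lra|exact Eq1]]. unfold K; lra. }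
      apply lip_concat with T2.
      { eapply lip_mono; [|apply (piece_lip g' P1 q2 T1 T2 k); [unfold T2; lra|exact Eq2]]. unfold K; lra. }
      apply lip_concat with T3.
      { eapply lip_mono; [|apply (piece_lip g' P2 q3 T2 T3 k); [unfold T3; lra|exact Eq3]]. unfold K; lra. }
      { eapply lip_mono; [|apply (piece_lip g' P3 q4 T3 T' k); [unfold T'; lra|intros s Hs; apply Eq4; lra]]. unfold K; lra. }
    + exists N. split; auto. intros t Ht HNt.
      pose proof (sgn_abs a1 Ha1); pose proof (sgn_abs a2 Ha2); pose proof (sgn_abs b1 Hb1); pose proof (sgn_abs b2 Hb2).
      destruct (Rle_dec t e1).
      { rewrite U0 by auto. pose proof (HG t ltac:(lra) HNt) as (_&_&_&_&_&_&B1&B2&_). auto. }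
      destruct (Rle_dec t T1). { rewrite U1 by lra. unfold q1; simpl; tauto. }
      destruct (Rle_dec t T2). { rewrite U2 by lra. unfold q2; simpl; tauto. }
      destruct (Rle_dec t T3). { rewrite U3 by lra. unfold q3; simpl; tauto. }
      rewrite U4 by lra. unfold q4; simpl; tauto.
    + exists (fun t => N t \/ (t = e1 \/ (t = T1 \/ (t = T2 \/ t = T3)))). split.
      { apply null_union; auto. apply null_union; [apply null_point|].
        apply null_union; [apply null_point|]. apply null_union; apply null_point. }
      intros t Ht HNt k Hk.
      assert (HN0 : ~ N t) by tauto.
      assert (t <> e1 /\ t <> T1 /\ t <> T2 /\ t <> T3) as (Ne1&Ne2&Ne3&Ne4) by tauto.
      destruct (Rlt_dec t e1).
      { rewrite U0, (Eq0 t) by lra.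
        apply (deriv_loc (Gf g k) _ t _ (e1 - t)); [lra| |].
        - intros s Hs. apply abs_lt_inv in Hs. rewrite Eq0 by lra. reflexivity.
        - apply (good_deriv g l u lam0 t k (HG t ltac:(lra) HN0) Hk). }
      destruct (Rlt_dec t T1).
      { rewrite U1 by lra. apply (piece_deriv g' P0 q1 e1 T1 t k); [lra|intros s Hs; apply Eq1; lra]. }
      destruct (Rlt_dec t T2).
      { rewrite U2 by lra. apply (piece_deriv g' P1 q2 T1 T2 t k); [lra|intros s Hs; apply Eq2; lra]. }
      destruct (Rlt_dec t T3).
      { rewrite U3 by lra. apply (piece_deriv g' P2 q3 T2 T3 t k); [lra|intros s Hs; apply Eq3; lra]. }
      rewrite U4 by lra. apply (piece_deriv g' P3 q4 T3 (t + 1) t k); [lra|intros s Hs; apply Eq4; lra].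
  - apply Eq0; lra.
  - rewrite Eq4 by (unfold T'; lra).
    replace (T' - T3) with r by (unfold T'; ring).
    rewrite G6, G5, G4, G3, G2.
    replace (e2 - e1) with tau by auto. rewrite E3, E4, E5. fold s6.
    unfold P3, P2, P1, P0, q1, q2, q3, q4. unfold r.
    apply final_alg; auto.
Qed.
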